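(* Under (A2) (with $\theta_{k,N}=\theta_k$) or under (A3), for each $k$, with $\mathbf d_{1,N}=N^{-1}\mathbf a'(\theta_{k,N})$ and $\mathbf d_{2,N}=\mathbf a(\theta_{k,N})$, one has $$\liminf_{N\to\infty}\mathbf d_{1,N}^*\boldsymbol\Pi_N\mathbf d_{1,N}>0\quad\text{and}\quad\liminf_{N\to\infty}\gamma_N>0,$$ where $\gamma_N=\sum_{j,\ell=1}^M\vartheta_{j,\ell}|\mathbf u_{j,N}^*(\mathbf d_{1,N}\mathbf d_{2,N}^*+\mathbf d_{2,N}\mathbf d_{1,N}^* )\mathbf u_{\ell,N}|^2$. Moreover, under (A2), $\mathbf d_{1,N}^*\boldsymbol\Pi_N\mathbf d_{1,N}\to c^2/12$.
   Context: Array model: $c>0$, $\sigma^2>0$, integer $K\ge1$; $M=M(N)>K$ with $M/N\to c$. Steering vector $\mathbf a(\theta)=M^{-1/2}(1,e^{\mathrm i\theta},\dots,e^{\mathrm i(M-1)\theta})^T$, derivative $\mathbf a'(\theta)$. $\mathbf A_N=[\mathbf a(\theta_{1,N}),\dots,\mathbf a(\theta_{K,N})]$, $\mathbf S_N\in\mathbb C^{K\times N}$ deterministic, $\mathbf B_N=N^{-1/2}\mathbf A_N\mathbf S_N$. $\mathbf u_{1,N},\dots,\mathbf u_{K,N}$ orthonormal eigenvectors of $\mathbf B_N\mathbf B_N^*$ for its nonzero eigenvalues $\lambda_{1,N}\ge\dots\ge\lambda_{K,N}$, $\mathbf u_{K+1,N},\dots,\mathbf u_{M,N}$ orthonormal basis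 of its kernel, $\boldsymbol\Pi_N=\mathbf I-\sum_{k\le K}\mathbf u_{k,N}\mathbf u_{k,N}^*$. $\lambda_k=\lim\lambda_{k,N}$ (under (A3), $\lambda_1=1+|\mathrm{sinc}(\alpha c/2)|$, $\lambda_2=1-|\mathrm{sinc}(\alpha c/2)|$, $\mathrm{sinc}(x)=\sin x/x$, $\mathrm{sinc}(0)=1$). Weights: for $1\le j,\ell\le K$, $\vartheta_{j,\ell}=\frac{\sigma^4c(\lambda_j\lambda_\ell+(\lambda_j+\lambda_\ell)\sigma^2+\sigma^4)(\lambda_j\lambda_\ell+\sigma^4c)}{4(\lambda_j^2-\sigma^4c)(\lambda_\ell^2-\sigma^4c)(\lambda_j\lambda_\ell-\sigma^4c)}$; for $j\le K<\ell$, $\vartheta_{j,\ell}=\vartheta_{\ell,j}=\frac{\sigma^2(\lambda_j+\sigma^2)}{4(\lambda_j^2-\sigma^4c)}$; $\vartheta_{j,\ell}=0$ for $j,\ell\ge K+1$. Assumption (A2): $\theta_{k,N}=\theta_k$ fixed, pairwise distinct modulo $2\pi$, eigenvalues of $N^{-1}\mathbf S_N\mathbf S_N^*$ converge to $\lambda_1>\dots>\lambda_K>\sigma^2\sqrt c$. Assumption (A3): $K=2$, $N^{-1}\mathbf S_N\mathbf S_N^*\to\mathbf I_2$, $\theta_{1,N}$ deterministic, $\theta_{2,N}=\theta_{1,N}+\alpha/N$, $\alpha>0$, $|\mathrm{sinc}(\alpha c/2)|<1-\sigma^2\sqrt c$. *)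

(* Defs.v *)
From Stdlib Require Import Reals ZArith Arith.
Open Scope R_scope.

Record Cx := mkC { Re : R; Im : R }.
Definition C0 : Cx := mkC 0 0.
Definition C1 : Cx := mkC 1 0.
Definition Cadd (z w : Cx) : Cx := mkC (Re z + Re w) (Im z + Im w).
Definition Copp (z : Cx) : Cx := mkC (- Re z) (- Im z).
Definition Cmul (z w : Cx) : Cx :=
  mkC (Re z * Re w - Im z * Im w) (Re z * Im w + Im z * Re w).
Definition Cconj (z : Cx) : Cx := mkC (Re z) (- Im z).
Definition Cscale (r : R) (z : Cx) : Cx := mkC (r * Re z) (r * Im z).
Definition Cexpi (t : R) : Cx := mkC (cos t) (sin t).
Definition Cabs2 (z : Cx) : R := Re z ^ 2 + Im z ^ 2.
Definition Cconv (x : nat -> Cx) (z : Cx) : Prop :=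
  Un_cv (fun N => Re (x N)) (Re z) /\ Un_cv (fun N => Im (x N)) (Im z).

Fixpoint Csum (n : nat) (f : nat -> Cx) : Cx :=
  match n with O => C0 | S m => Cadd (Csum m f) (f m) end.
Fixpoint rsum (n : nat) (f : nat -> R) : R :=
  match n with O => 0 | S m => rsum m f + f m end.

Definition cinner (n : nat) (x y : nat -> Cx) : Cx :=
  Csum n (fun i => Cmul (Cconj (x i)) (y i)).
Definition matvec (n : nat) (A : nat -> nat -> Cx) (x : nat -> Cx) : nat -> Cx :=
  fun i => Csum n (fun l => Cmul (A i l) (x l)).
Definition qform (n : nat) (A : nat -> nat -> Cx) (x y : nat -> Cx) : Cx :=
  Csum n (fun i => Csum n (fun j => Cmul (Cconj (x i)) (Cmul (A i j) (y j)))).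
Definition orthonormal (n m : nat) (v : nat -> nat -> Cx) : Prop :=
  forall j l, (j < m)%nat -> (l < m)%nat ->
    cinner n (v j) (v l) = if Nat.eqb j l then C1 else C0.
Definition is_eigvec (n : nat) (A : nat -> nat -> Cx) (mu : R) (x : nat -> Cx) : Prop :=
  forall i, (i < n)%nat -> matvec n A x i = Cscale mu (x i).

(** steering vector a(theta) in Cx^M : entries M^{-1/2} e^{i m theta}, m = 0..M-1 *)
Definition steer (M : nat) (th : R) : nat -> Cx :=
  fun m => Cscale (/ sqrt (INR M)) (Cexpi (INR m * th)).
(** its derivative a'(theta) : entries M^{-1/2} (i m) e^{i m theta} *)
Definition steer' (M : nat) (th : R) : nat -> Cx :=
  fun m => Cscale (/ sqrt (INR M)) (Cmul (mkC 0 (INR m)) (Cexpi (INR m * th))).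
(** B_N = N^{-1/2} A_N S_N  (M x N), th k = theta_{k+1,N}, S : K x N *)
Definition Bmat (M N K : nat) (th : nat -> R) (S : nat -> nat -> Cx) : nat -> nat -> Cx :=
  fun i j => Cscale (/ sqrt (INR N)) (Csum K (fun k => Cmul (steer M (th k) i) (S k j))).
Definition BBs (M N K : nat) (th : nat -> R) (S : nat -> nat -> Cx) : nat -> nat -> Cx :=
  fun i j => Csum N (fun l => Cmul (Bmat M N K th S i l) (Cconj (Bmat M N K th S j l))).
Definition Gram (N K : nat) (S : nat -> nat -> Cx) : nat -> nat -> Cx :=
  fun i j => Cscale (/ INR N) (Csum N (fun l => Cmul (S i l) (Cconj (S j l)))).
Definition PiMat (K : nat) (u : nat -> nat -> Cx) : nat -> nat -> Cx :=
  fun i j => Cadd (if Nat.eqb i j then C1 else C0)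
                  (Copp (Csum K (fun k => Cmul (u k i) (Cconj (u k j))))).
Definition Dmat (d1 d2 : nat -> Cx) : nat -> nat -> Cx :=
  fun i j => Cadd (Cmul (d1 i) (Cconj (d2 j))) (Cmul (d2 i) (Cconj (d1 j))).

Definition sinc (x : R) : R := if Req_EM_T x 0 then 1 else sin x / x.

(** weights vartheta_{j,l}, 0-based: index j < K corresponds to the paper's j+1 <= K.
    s2 stands for sigma^2 (so sigma^4 = s2^2). *)
Definition vtheta (c s2 : R) (K : nat) (lam : nat -> R) (j l : nat) : R :=
  match Nat.ltb j K, Nat.ltb l K with
  | true, true =>
      s2 ^ 2 * c * (lam j * lam l + (lam j + lam l) * s2 + s2 ^ 2)
        * (lam j * lam l + s2 ^ 2 * c)
      / (4 * (lam j ^ 2 - s2 ^ 2 * c) * (lam l ^ 2 - s2 ^ 2 * c)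
           * (lam j * lam l - s2 ^ 2 * c))
  | true, false => s2 * (lam j + s2) / (4 * (lam j ^ 2 - s2 ^ 2 * c))
  | false, true => s2 * (lam l + s2) / (4 * (lam l ^ 2 - s2 ^ 2 * c))
  | false, false => 0
  end.

Definition gammaN (M K : nat) (c s2 : R) (lam : nat -> R) (u : nat -> nat -> Cx)
    (d1 d2 : nat -> Cx) : R :=
  rsum M (fun j => rsum M (fun l =>
    vtheta c s2 K lam j l * Cabs2 (qform M (Dmat d1 d2) (u j) (u l)))).

(** liminf_{N -> oo} x_N > 0 *)
Definition liminf_pos (x : nat -> R) : Prop :=
  exists eps, 0 < eps /\ exists N0, forall N, (N0 <= N)%nat -> eps <= x N.

(** Assumption (A2), with limits lam 0 > ... > lam (K-1) of the eigenvalues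
    of N^{-1} S_N S_N^* (listed with multiplicity via an orthonormal eigenbasis). *)
Definition A2 (c s2 : R) (K : nat) (th : nat -> nat -> R)
    (S : nat -> nat -> nat -> Cx) (lam : nat -> R) : Prop :=
  (exists th0 : nat -> R,
      (forall N k, th N k = th0 k) /\
      (forall k l, (k < K)%nat -> (l < K)%nat -> k <> l ->
         forall z : Z, th0 k - th0 l <> 2 * PI * IZR z)) /\
  (exists (mu : nat -> nat -> R) (v : nat -> nat -> nat -> Cx),
      (forall N, orthonormal K K (v N) /\
         forall k, (k < K)%nat -> is_eigvec K (Gram N K (S N)) (mu k N) (v N k)) /\
      (forall k, (k < K)%nat -> Un_cv (mu k) (lam k))) /\
  (forall k, (k + 1 < K)%nat -> lam (k + 1)%nat < lam k) /\
  s2 * sqrt c < lam (K - 1)%nat.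

Definition A3 (c s2 : R) (K : nat) (th : nat -> nat -> R)
    (S : nat -> nat -> nat -> Cx) (alpha : R) : Prop :=
  K = 2%nat /\
  (forall i j, (i < 2)%nat -> (j < 2)%nat ->
     Cconv (fun N => Gram N K (S N) i j) (if Nat.eqb i j then C1 else C0)) /\
  (forall N, (1 <= N)%nat -> th N 1%nat = th N 0%nat + alpha / INR N) /\
  0 < alpha /\
  Rabs (sinc (alpha * c / 2)) < 1 - s2 * sqrt c.

(** limiting eigenvalues under (A3) (0-based) *)
Definition lamA3 (c alpha : R) (k : nat) : R :=
  if Nat.eqb k 0 then 1 + Rabs (sinc (alpha * c / 2)) else 1 - Rabs (sinc (alpha * c / 2)).

(* Main.v *)
Require Import Defs.
From Stdlib Require Import Reals ZArith Arith Lra Lia Psatz.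
Import Defs.
Open Scope R_scope.

Lemma Cx_eq (z w : Cx) : Re z = Re w -> Im z = Im w -> z = w.
Proof. destruct z, w; simpl; intros; subst; reflexivity. Qed.
Ltac cx := apply Cx_eq; simpl; ring.

Definition delta (i j : nat) : Cx := if Nat.eqb i j then C1 else C0.
Definition nrm (n : nat) (x : nat -> Cx) : R := rsum n (fun i => Cabs2 (x i)).

Lemma Csum_Re n f : Re (Csum n f) = rsum n (fun i => Re (f i)).
Proof. induction n; simpl; [reflexivity| rewrite IHn; reflexivity]. Qed.
Lemma Csum_Im n f : Im (Csum n f) = rsum n (fun i => Im (f i)).
Proof. induction n; simpl; [reflexivity| rewrite IHn; reflexivity]. Qed.
Lemma Csum_ext n f g : (forall i, (i < n)%nat -> f i = g i) -> Csum n f = Csum n g.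
Proof. induction n; intros H; simpl; [reflexivity|]. rewrite IHn, H; auto. Qed.
Lemma rsum_ext n f g : (forall i, (i < n)%nat -> f i = g i) -> rsum n f = rsum n g.
Proof. induction n; intros H; simpl; [reflexivity|]. rewrite IHn, H; auto. Qed.
Lemma Csum_add n f g : Csum n (fun i => Cadd (f i) (g i)) = Cadd (Csum n f) (Csum n g).
Proof. induction n; simpl. cx. rewrite IHn. cx. Qed.
Lemma Csum_mul_l n c f : Csum n (fun i => Cmul c (f i)) = Cmul c (Csum n f).
Proof. induction n; simpl. cx. rewrite IHn. cx. Qed.
Lemma Csum_mul_r n c f : Csum n (fun i => Cmul (f i) c) = Cmul (Csum n f) c.
Proof. induction n; simpl. cx. rewrite IHn. cx. Qed.
Lemma Csum_scale n r f : Csum n (fun i => Cscale r (f i)) = Cscale r (Csum n f).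
Proof. induction n; simpl. cx. rewrite IHn. cx. Qed.
Lemma Csum_conj n f : Cconj (Csum n f) = Csum n (fun i => Cconj (f i)).
Proof. induction n; simpl. cx. rewrite <- IHn. cx. Qed.
Lemma Csum_opp n f : Csum n (fun i => Copp (f i)) = Copp (Csum n f).
Proof. induction n; simpl. cx. rewrite IHn. cx. Qed.
Lemma Csum_swap n m f :
  Csum n (fun i => Csum m (fun j => f i j)) = Csum m (fun j => Csum n (fun i => f i j)).
Proof.
  induction n; simpl.
  - induction m; simpl; [reflexivity|]. rewrite <- IHm. cx.
  - rewrite IHn, <- Csum_add. reflexivity.
Qed.
Lemma Csum_zero n f : (forall i, (i < n)%nat -> f i = C0) -> Csum n f = C0.
Proof. induction n; intros H; simpl; [reflexivity|]. rewrite IHn, H; auto. cx. Qed.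
Lemma Csum_delta n f k : (k < n)%nat ->
  Csum n (fun i => Cmul (f i) (delta i k)) = f k.
Proof.
  induction n; intros Hk; [lia|]. simpl.
  destruct (Nat.eq_dec k n) as [->|Hne].
  - rewrite Csum_zero. unfold delta; rewrite Nat.eqb_refl. cx.
    intros i Hi. unfold delta. replace (i =? n)%nat with false by (symmetry; apply Nat.eqb_neq; lia). cx.
  - rewrite IHn by lia. unfold delta. replace (n =? k)%nat with false by (symmetry; apply Nat.eqb_neq; lia). cx.
Qed.
Lemma Csum_delta' n f k : (k < n)%nat ->
  Csum n (fun i => Cmul (delta k i) (f i)) = f k.
Proof.
  intros Hk. rewrite <- (Csum_delta n f k Hk). apply Csum_ext. intros i _.
  unfold delta. rewrite Nat.eqb_sym. destruct (i =? k)%nat; cx.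
Qed.

Lemma rsum_add n f g : rsum n (fun i => f i + g i) = rsum n f + rsum n g.
Proof. induction n; simpl; [ring|]. rewrite IHn; ring. Qed.
Lemma rsum_scal n r f : rsum n (fun i => r * f i) = r * rsum n f.
Proof. induction n; simpl; [ring|]. rewrite IHn; ring. Qed.
Lemma rsum_opp n f : rsum n (fun i => - f i) = - rsum n f.
Proof. induction n; simpl; [ring|]. rewrite IHn; ring. Qed.
Lemma rsum_le n f g : (forall i, (i < n)%nat -> f i <= g i) -> rsum n f <= rsum n g.
Proof. induction n; intros H; simpl; [lra|]. pose proof (H n ltac:(lia)). pose proof (IHn ltac:(intros; apply H; lia)). lra. Qed.
Lemma rsum_nonneg n f : (forall i, (i < n)%nat -> 0 <= f i) -> 0 <= rsum n f.
Proof. intros H. replace 0 with (rsum n (fun _ => 0)). apply rsum_le; auto.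
  clear H; induction n; simpl; [reflexivity| rewrite IHn; ring]. Qed.
Lemma rsum_zero n f : (forall i, (i < n)%nat -> f i = 0) -> rsum n f = 0.
Proof. induction n; intros H; simpl; [reflexivity|]. rewrite IHn, H; auto; try ring. Qed.
Lemma rsum_swap n m f :
  rsum n (fun i => rsum m (fun j => f i j)) = rsum m (fun j => rsum n (fun i => f i j)).
Proof.
  induction n; simpl.
  - rewrite rsum_zero; auto.
  - rewrite IHn, <- rsum_add. reflexivity.
Qed.
Lemma rsum_term_le n f k : (forall i, (i < n)%nat -> 0 <= f i) -> (k < n)%nat -> f k <= rsum n f.
Proof.
  induction n; intros H Hk; [lia|]. simpl.
  destruct (Nat.eq_dec k n) as [->|Hne].
  - pose proof (rsum_nonneg n f ltac:(intros; apply H; lia)). lra.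
  - pose proof (IHn ltac:(intros; apply H; lia) ltac:(lia)). pose proof (H n ltac:(lia)). lra.
Qed.
Lemma rsum_const n r : rsum n (fun _ => r) = INR n * r.
Proof. induction n; simpl rsum; [simpl; ring|]. rewrite IHn, S_INR. ring. Qed.

Lemma Cabs2_nonneg z : 0 <= Cabs2 z.
Proof. unfold Cabs2. nra. Qed.
Lemma Cabs2_mul z w : Cabs2 (Cmul z w) = Cabs2 z * Cabs2 w.
Proof. unfold Cabs2; simpl. ring. Qed.
Lemma Cabs2_conj z : Cabs2 (Cconj z) = Cabs2 z.
Proof. unfold Cabs2; simpl. ring. Qed.
Lemma Cabs2_scale r z : Cabs2 (Cscale r z) = r ^ 2 * Cabs2 z.
Proof. unfold Cabs2; simpl. ring. Qed.
Lemma Cabs2_opp z : Cabs2 (Copp z) = Cabs2 z.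
Proof. unfold Cabs2; simpl. ring. Qed.
Lemma Cabs2_expi t : Cabs2 (Cexpi t) = 1.
Proof. unfold Cabs2; simpl. pose proof (sin2_cos2 t) as H. unfold Rsqr in H. nra. Qed.
Lemma Cabs2_add_le z w : Cabs2 (Cadd z w) <= 2 * Cabs2 z + 2 * Cabs2 w.
Proof. destruct z as [a b], w as [c d]; unfold Cabs2; simpl. pose proof (pow2_ge_0 (a-c)); pose proof (pow2_ge_0 (b-d)). nra. Qed.
Lemma Cmul_conj_self z : Cmul (Cconj z) z = mkC (Cabs2 z) 0.
Proof. unfold Cabs2. cx. Qed.
Lemma nrm_nonneg n x : 0 <= nrm n x.
Proof. apply rsum_nonneg; intros; apply Cabs2_nonneg. Qed.
Lemma cinner_self n x : cinner n x x = mkC (nrm n x) 0.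
Proof.
  unfold cinner, nrm. apply Cx_eq.
  - rewrite Csum_Re. apply rsum_ext. intros. rewrite Cmul_conj_self. reflexivity.
  - rewrite Csum_Im. simpl. rewrite rsum_zero; auto. intros. simpl. ring.
Qed.
Lemma Re_le_abs z : Re z ^ 2 <= Cabs2 z.
Proof. unfold Cabs2. nra. Qed.

Lemma sq_le (p q : R) : 0 <= q -> p ^ 2 <= q ^ 2 -> p <= q.
Proof. intros. nra. Qed.

Lemma CS n x y : Cabs2 (cinner n x y) <= nrm n x * nrm n y.
Proof.
  unfold cinner, nrm. induction n; simpl.
  - unfold Cabs2; simpl. lra.
  - set (S := Csum n (fun i => Cmul (Cconj (x i)) (y i))) in *.
    set (X := rsum n (fun i => Cabs2 (x i))) in *. set (Y := rsum n (fun i => Cabs2 (y i))) in *.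
    assert (HX : 0 <= X) by (apply rsum_nonneg; intros; apply Cabs2_nonneg).
    assert (HY : 0 <= Y) by (apply rsum_nonneg; intros; apply Cabs2_nonneg).
    set (a := x n) in *. set (b := y n) in *.
    destruct S as [s1 s2]. destruct a as [a1 a2]. destruct b as [b1 b2].
    unfold Cabs2 in *; simpl in *.
    set (t1 := a1 * b1 - - a2 * b2). set (t2 := a1 * b2 + - a2 * b1).
    assert (Ht : t1 ^ 2 + t2 ^ 2 = (a1^2+a2^2)*(b1^2+b2^2)) by (unfold t1, t2; ring).
    assert (Hk : 2 * (s1 * t1 + s2 * t2) <= X * (b1^2+b2^2) + Y * (a1^2+a2^2)).
    { apply sq_le. nra.
      assert ((s1*t1+s2*t2)^2 <= (s1^2+s2^2)*(t1^2+t2^2)).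
      { pose proof (pow2_ge_0 (s1*t2 - s2*t1)). nra. }
      assert ((s1^2+s2^2)*(t1^2+t2^2) <= X*Y*((a1^2+a2^2)*(b1^2+b2^2))).
      { rewrite Ht. apply Rmult_le_compat_r; nra. }
      pose proof (pow2_ge_0 (X * (b1^2+b2^2) - Y * (a1^2+a2^2))). nra. }
    fold t1 t2. nra.
Qed.

Module MC.
From mathcomp Require Import all_boot all_algebra.
From mathcomp Require Import Rstruct complex.
Import GRing.Theory Num.Theory.
Local Open Scope ring_scope.
Definition phi (z : Cx) : R[i] := Complex (Defs.Re z) (Defs.Im z).
Lemma phi_inj z w : phi z = phi w -> z = w.
Proof. case: z; case: w => ? ? ? ? [-> ->]. by []. Qed.
Lemma phi_sum n f : phi (Csum n f) = \sum_(j < n) phi (f j).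
Proof. elim: n => [|n IH]; first by rewrite big_ord0. by rewrite big_ord_recr /= -IH. Qed.

Lemma complete_mc (n : nat) (u : nat -> nat -> Cx) :
  (forall j l, (j < n)%coq_nat -> (l < n)%coq_nat ->
     Csum n (fun i => Cmul (Cconj (u j i)) (u l i)) = if Nat.eqb j l then Defs.C1 else Defs.C0) ->
  forall i i', (i < n)%coq_nat -> (i' < n)%coq_nat ->
     Csum n (fun j => Cmul (u j i) (Cconj (u j i'))) = if Nat.eqb i i' then Defs.C1 else Defs.C0.
Proof.
move=> Hon i i' /ltP Hi /ltP Hi'.
pose U : 'M[R[i]]_n := \matrix_(a < n, b < n) phi (u b a).
pose V : 'M[R[i]]_n := \matrix_(a < n, b < n) (phi (u a b))^*.
have HVU : V *m U = 1%:M.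
  apply/matrixP => j l; rewrite !mxE.
  have E := Hon j l (ltP (ltn_ord j)) (ltP (ltn_ord l)).
  have E' := congr1 phi E; rewrite phi_sum in E'.
  rewrite (eq_bigr (fun k : 'I_n => phi (Cmul (Cconj (u j k)) (u l k)))); last first.
    by move=> k _; rewrite !mxE.
  rewrite E'.
  case: (Nat.eqb_spec j l) => [/val_inj -> | Hne]; first by rewrite eqxx.
  have -> : (j == l) = false by apply/negbTE/eqP => E3; apply: Hne; rewrite E3.
  by [].
have HUV := mulmx1C HVU.
apply: phi_inj. rewrite phi_sum.
move/matrixP: HUV => /(_ (Ordinal Hi) (Ordinal Hi')).
rewrite !mxE => E.
rewrite (eq_bigr (fun k : 'I_n => U (Ordinal Hi) k * V k (Ordinal Hi'))); last first.
  by move=> k _; rewrite !mxE.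
rewrite E.
case: (Nat.eqb_spec i i') => [E2 | Hne].
  subst i'. by rewrite (_ : Ordinal Hi = Ordinal Hi') ?eqxx //; apply: val_inj.
have -> : (Ordinal Hi == Ordinal Hi') = false.
  by apply/negbTE/eqP => E3; apply: Hne; move: (congr1 val E3).
by [].
Qed.
End MC.

Lemma complete n u : orthonormal n n u ->
  forall i i', (i < n)%nat -> (i' < n)%nat ->
  Csum n (fun j => Cmul (u j i) (Cconj (u j i'))) = delta i i'.
Proof. intros H. apply MC.complete_mc. intros. apply H; auto. Qed.

Lemma Csum_prod n m f g :
  Cmul (Csum n f) (Csum m g) = Csum n (fun i => Csum m (fun j => Cmul (f i) (g j))).
Proof.
  rewrite <- Csum_mul_r. apply Csum_ext. intros i _. rewrite <- Csum_mul_l. reflexivity.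
Qed.

Lemma parseval_gen n u (Hon : orthonormal n n u) x y :
  cinner n x y = Csum n (fun j => Cmul (Cconj (cinner n (u j) x)) (cinner n (u j) y)).
Proof.
  unfold cinner.
  transitivity (Csum n (fun i => Csum n (fun i' =>
     Cmul (Cmul (Cconj (x i)) (y i')) (Csum n (fun j => Cmul (u j i) (Cconj (u j i'))))))).
  - apply Csum_ext. intros i Hi.
    rewrite (Csum_ext n _ (fun i' => Cmul (Cmul (Cconj (x i)) (y i')) (delta i i'))).
    + rewrite <- (Csum_delta n (fun i' => Cmul (Cconj (x i)) (y i')) i Hi).
      apply Csum_ext. intros i' _. unfold delta. rewrite Nat.eqb_sym. reflexivity.
    + intros i' Hi'. rewrite complete; auto.
  - symmetry.
    rewrite (Csum_ext n _ (fun j => Csum n (fun i => Csum n (fun i' =>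
       Cmul (Cmul (Cconj (x i)) (y i')) (Cmul (u j i) (Cconj (u j i'))))))).
    + rewrite Csum_swap. apply Csum_ext. intros i _.
      rewrite Csum_swap. apply Csum_ext. intros i' _.
      rewrite Csum_mul_l. reflexivity.
    + intros j _. rewrite Csum_conj, Csum_prod. apply Csum_ext. intros i _.
      apply Csum_ext. intros i' _. cx.
Qed.

Lemma Re_mkC a b : Re (mkC a b) = a. Proof. reflexivity. Qed.

Lemma parseval n u (Hon : orthonormal n n u) x :
  nrm n x = rsum n (fun j => Cabs2 (cinner n (u j) x)).
Proof.
  assert (H := parseval_gen n u Hon x x). rewrite cinner_self in H.
  apply (f_equal Re) in H. rewrite Re_mkC in H. rewrite H, Csum_Re.
  apply rsum_ext. intros. rewrite Cmul_conj_self. reflexivity.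
Qed.

Definition Avec (K : nat) (a : nat -> nat -> Cx) (c : nat -> Cx) : nat -> Cx :=
  fun i => Csum K (fun k => Cmul (a k i) (c k)).
Definition Adj (n : nat) (a : nat -> nat -> Cx) (x : nat -> Cx) : nat -> Cx :=
  fun k => cinner n (a k) x.
Definition Gmat (n : nat) (a : nat -> nat -> Cx) : nat -> nat -> Cx :=
  fun k l => cinner n (a k) (a l).

Lemma adjoint n K a c x :
  cinner n (Avec K a c) x = cinner K c (Adj n a x).
Proof.
  unfold cinner, Avec, Adj.
  rewrite (Csum_ext n _ (fun i => Csum K (fun k => Cmul (Cconj (c k)) (Cmul (Cconj (a k i)) (x i))))).
  - rewrite Csum_swap. apply Csum_ext. intros k _. unfold cinner. rewrite Csum_mul_l. reflexivity.
  - intros i _. rewrite Csum_conj, <- Csum_mul_r. apply Csum_ext. intros k _. cx.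
Qed.

Lemma Adj_Avec n K a c : forall k,
  Adj n a (Avec K a c) k = matvec K (Gmat n a) c k.
Proof.
  intros k. unfold Adj, Avec, matvec, Gmat, cinner.
  rewrite (Csum_ext n _ (fun i => Csum K (fun l => Cmul (Cconj (a k i)) (Cmul (a l i) (c l))))).
  - rewrite Csum_swap. apply Csum_ext. intros l _. rewrite <- Csum_mul_r. apply Csum_ext. intros. cx.
  - intros i _. rewrite Csum_mul_l. reflexivity.
Qed.

Lemma cinner_ext n x y x' y' : (forall i, (i < n)%nat -> x i = x' i) ->
  (forall i, (i < n)%nat -> y i = y' i) -> cinner n x y = cinner n x' y'.
Proof. intros H1 H2. unfold cinner. apply Csum_ext. intros. rewrite H1, H2; auto. Qed.

Lemma nrm_Avec n K a c :
  nrm n (Avec K a c) = Re (cinner K c (matvec K (Gmat n a) c)).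
Proof.
  assert (H := adjoint n K a c (Avec K a c)). rewrite cinner_self in H.
  apply (f_equal Re) in H. rewrite Re_mkC in H. rewrite H. f_equal.
  apply cinner_ext; auto. intros. apply Adj_Avec.
Qed.

Lemma Rabs_rsum_le n f g : (forall i, (i < n)%nat -> Rabs (f i) <= g i) -> Rabs (rsum n f) <= rsum n g.
Proof.
  induction n; intros H; simpl. rewrite Rabs_R0; lra.
  eapply Rle_trans. apply Rabs_triang. pose proof (H n ltac:(lia)).
  pose proof (IHn ltac:(intros; apply H; lia)). lra.
Qed.

Lemma term_bound x e y eps : 0 <= eps -> Cabs2 e <= eps ^ 2 ->
  Rabs (Re (Cmul (Cconj x) (Cmul e y))) <= eps * (Cabs2 x + Cabs2 y) / 2.
Proof.
  intros He Hb. apply sq_le.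
  - pose proof (Cabs2_nonneg x); pose proof (Cabs2_nonneg y). apply Rmult_le_pos; [|lra]. nra.
  - rewrite pow2_abs.
    eapply Rle_trans. apply Re_le_abs.
    rewrite !Cabs2_mul, Cabs2_conj.
    pose proof (Cabs2_nonneg x); pose proof (Cabs2_nonneg y); pose proof (Cabs2_nonneg e).
    set (X := Cabs2 x) in *. set (Y := Cabs2 y) in *.
    assert (X * (Cabs2 e * Y) <= X * (eps^2 * Y)) by (apply Rmult_le_compat_l; nra).
    pose proof (pow2_ge_0 (X - Y)). nra.
Qed.

Lemma qform_near n H eps w :
  (forall i j, (i < n)%nat -> (j < n)%nat -> 0 <= eps i j /\
      Cabs2 (Cadd (H i j) (Copp (delta i j))) <= eps i j ^ 2) ->
  Rabs (Re (cinner n w (matvec n H w)) - nrm n w) <=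
    rsum n (fun i => rsum n (fun j => eps i j * (Cabs2 (w i) + Cabs2 (w j)) / 2)).
Proof.
  intros Hb.
  assert (E : Re (cinner n w (matvec n H w)) - nrm n w =
     rsum n (fun i => rsum n (fun j => Re (Cmul (Cconj (w i)) (Cmul (Cadd (H i j) (Copp (delta i j))) (w j)))))).
  { unfold cinner, matvec, nrm. rewrite Csum_Re.
    unfold Rminus. rewrite <- rsum_opp, <- rsum_add. apply rsum_ext. intros i Hi.
    rewrite <- Csum_mul_l, Csum_Re.
    rewrite (rsum_ext n (fun j => Re (Cmul (Cconj (w i)) (Cmul (Cadd (H i j) (Copp (delta i j))) (w j))))
       (fun j => Re (Cmul (Cconj (w i)) (Cmul (H i j) (w j))) + - Re (Cmul (Cconj (w i)) (Cmul (delta i j) (w j))))).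
    - rewrite rsum_add, rsum_opp. f_equal. f_equal.
      rewrite <- Csum_Re. rewrite Csum_mul_l. rewrite Csum_delta' by auto.
      rewrite Cmul_conj_self. reflexivity.
    - intros j _. simpl. ring. }
  rewrite E. apply Rabs_rsum_le. intros i Hi. apply Rabs_rsum_le. intros j Hj.
  destruct (Hb i j Hi Hj). apply term_bound; auto.
Qed.

Definition Bstar (n Nn K : nat) (th : nat -> R) (S : nat -> nat -> Cx) (x : nat -> Cx) : nat -> Cx :=
  fun l => Csum n (fun i => Cmul (Cconj (Bmat n Nn K th S i l)) (x i)).
Definition av (n : nat) (th : nat -> R) : nat -> nat -> Cx := fun k => steer n (th k).

Lemma Cabs2_zero z : Cabs2 z = 0 -> z = C0.
Proof. destruct z as [a b]; unfold Cabs2; simpl; intros H. apply Cx_eq; simpl; nra. Qed.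

Lemma rsum_nonneg_zero n f : (forall i, (i < n)%nat -> 0 <= f i) -> rsum n f = 0 ->
  forall i, (i < n)%nat -> f i = 0.
Proof.
  intros H0 Hs i Hi. pose proof (rsum_term_le n f i H0 Hi). pose proof (H0 i Hi). lra.
Qed.

Lemma nrm_zero n x : nrm n x = 0 -> forall i, (i < n)%nat -> x i = C0.
Proof.
  intros H i Hi. apply Cabs2_zero. apply (rsum_nonneg_zero n (fun i => Cabs2 (x i))); auto.
  intros; apply Cabs2_nonneg.
Qed.

Lemma quad_BBs_C n Nn K th S x :
  cinner n x (matvec n (BBs n Nn K th S) x) =
  Csum Nn (fun l => Cmul (Cconj (Bstar n Nn K th S x l)) (Bstar n Nn K th S x l)).
Proof.
  set (B := Bmat n Nn K th S).
  unfold cinner, matvec, BBs, Bstar. fold B.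
  transitivity (Csum n (fun i => Csum Nn (fun l => Csum n (fun i' =>
       Cmul (Cmul (B i l) (Cconj (x i))) (Cmul (Cconj (B i' l)) (x i')))))).
  - apply Csum_ext; intros i _. rewrite <- Csum_mul_l.
    rewrite (Csum_ext n _ (fun i' => Csum Nn (fun l => Cmul (Cmul (B i l) (Cconj (x i))) (Cmul (Cconj (B i' l)) (x i'))))).
    + apply Csum_swap.
    + intros i' _. rewrite <- Csum_mul_r, <- Csum_mul_l. apply Csum_ext; intros. cx.
  - rewrite Csum_swap. apply Csum_ext; intros l _.
    rewrite Csum_conj, Csum_prod. apply Csum_ext; intros i _. apply Csum_ext; intros i' _. cx.
Qed.

Lemma quad_BBs n Nn K th S x :
  Re (cinner n x (matvec n (BBs n Nn K th S) x)) = nrm Nn (Bstar n Nn K th S x).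
Proof.
  rewrite quad_BBs_C, Csum_Re. unfold nrm. apply rsum_ext. intros. rewrite Cmul_conj_self. reflexivity.
Qed.

Lemma Cconj_scale r z : Cconj (Cscale r z) = Cscale r (Cconj z).
Proof. cx. Qed.

Lemma Cmul_scale_l r z w : Cmul (Cscale r z) w = Cscale r (Cmul z w).
Proof. cx. Qed.
Lemma Cmul_scale_r r z w : Cmul z (Cscale r w) = Cscale r (Cmul z w).
Proof. cx. Qed.

Lemma Bstar_formula n Nn K th S x l :
  Bstar n Nn K th S x l =
  Cscale (/ sqrt (INR Nn)) (Csum K (fun k => Cmul (Cconj (S k l)) (cinner n (av n th k) x))).
Proof.
  unfold Bstar, Bmat, cinner, av.
  rewrite <- Csum_scale.
  rewrite (Csum_ext K _ (fun k => Csum n (fun i => Cscale (/ sqrt (INR Nn)) (Cmul (Cconj (S k l)) (Cmul (Cconj (steer n (th k) i)) (x i)))))).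
  - rewrite Csum_swap. apply Csum_ext; intros i _.
    rewrite Cconj_scale, Csum_conj, Cmul_scale_l, Csum_scale. f_equal.
    rewrite <- Csum_mul_r. apply Csum_ext; intros. cx.
  - intros k _. rewrite Csum_scale, Csum_mul_l. reflexivity.
Qed.

Definition ccoef (n Nn K : nat) (th : nat -> R) (S : nat -> nat -> Cx) (x : nat -> Cx) : nat -> Cx :=
  fun k => Cscale (/ sqrt (INR Nn)) (Csum Nn (fun l => Cmul (S k l) (Bstar n Nn K th S x l))).

Lemma BBs_formula n Nn K th S x i :
  matvec n (BBs n Nn K th S) x i = Avec K (av n th) (ccoef n Nn K th S x) i.
Proof.
  unfold matvec, BBs, Avec, ccoef, av.
  transitivity (Csum Nn (fun l => Cmul (Bmat n Nn K th S i l) (Bstar n Nn K th S x l))).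
  - unfold Bstar.
    rewrite (Csum_ext n _ (fun i' => Csum Nn (fun l => Cmul (Bmat n Nn K th S i l) (Cmul (Cconj (Bmat n Nn K th S i' l)) (x i'))))).
    + rewrite Csum_swap. apply Csum_ext; intros l _. rewrite Csum_mul_l. reflexivity.
    + intros i' _. rewrite <- Csum_mul_r. apply Csum_ext; intros. cx.
  - unfold Bmat.
    rewrite (Csum_ext Nn _ (fun l => Csum K (fun k => Cmul (steer n (th k) i)
        (Cscale (/ sqrt (INR Nn)) (Cmul (S k l) (Bstar n Nn K th S x l)))))).
    + rewrite Csum_swap. apply Csum_ext; intros k _.
      rewrite <- Csum_scale, <- Csum_mul_l. apply Csum_ext; intros. reflexivity.
    + intros l _. rewrite Cmul_scale_l, <- Csum_mul_r, <- Csum_scale. apply Csum_ext; intros. cx.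
Qed.

Lemma cinner_scale_r n x r y : cinner n x (fun i => Cscale r (y i)) = Cscale r (cinner n x y).
Proof. unfold cinner. rewrite <- Csum_scale. apply Csum_ext; intros. cx. Qed.

Lemma cinner_conj n x y : cinner n y x = Cconj (cinner n x y).
Proof. unfold cinner. rewrite Csum_conj. apply Csum_ext; intros. cx. Qed.

Lemma rsum_trunc n m f : (m <= n)%nat -> (forall j, (m <= j)%nat -> (j < n)%nat -> f j = 0) ->
  rsum n f = rsum m f.
Proof.
  intros Hmn. induction n; intros H.
  - replace m with 0%nat by lia. reflexivity.
  - destruct (Nat.eq_dec m (S n)) as [->|Hne]; [reflexivity|].
    simpl. rewrite IHn by (lia || (intros; apply H; lia)). rewrite H by lia. ring.
Qed.

Lemma Avec_scale K a r c i : Cscale r (Avec K a c i) = Avec K a (fun k => Cscale r (c k)) i.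
Proof. unfold Avec. rewrite <- Csum_scale. apply Csum_ext; intros. cx. Qed.

Lemma qform_Pi n K u x :
  qform n (PiMat K u) x x =
  Cadd (cinner n x x) (Copp (Csum K (fun k => Cmul (Cconj (cinner n (u k) x)) (cinner n (u k) x)))).
Proof.
  unfold qform, PiMat, cinner.
  transitivity (Csum n (fun i => Cadd (Cmul (Cconj (x i)) (x i))
     (Copp (Csum K (fun k => Csum n (fun i' => Cmul (Cmul (Cconj (x i)) (u k i)) (Cmul (Cconj (u k i')) (x i')))))))).
  - apply Csum_ext; intros i Hi.
    rewrite (Csum_ext n _ (fun i' => Cadd (Cmul (Cmul (Cconj (x i)) (x i')) (delta i i'))
        (Copp (Csum K (fun k => Cmul (Cmul (Cconj (x i)) (u k i)) (Cmul (Cconj (u k i')) (x i'))))))).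
    + rewrite Csum_add. f_equal.
      * rewrite <- (Csum_delta n (fun i' => Cmul (Cconj (x i)) (x i')) i Hi).
        apply Csum_ext; intros i' _. unfold delta. rewrite Nat.eqb_sym. reflexivity.
      * rewrite Csum_opp. f_equal. apply Csum_swap.
    + intros i' _. unfold delta.
      rewrite (Csum_ext K (fun k => Cmul (Cmul (Cconj (x i)) (u k i)) (Cmul (Cconj (u k i')) (x i'))) (fun k => Cmul (Cconj (x i)) (Cmul (Cmul (u k i) (Cconj (u k i'))) (x i')))).
      2:{ intros; cx. }
      rewrite Csum_mul_l, Csum_mul_r.
      set (s := Csum K _). destruct (i =? i')%nat; cx.
  - rewrite Csum_add, Csum_opp. f_equal. f_equal. rewrite Csum_swap.
    apply Csum_ext; intros k _. rewrite Csum_conj, Csum_prod.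
    apply Csum_ext; intros i _. apply Csum_ext; intros i' _. cx.
Qed.

Lemma q1_formula n K u x :
  Re (qform n (PiMat K u) x x) = nrm n x - rsum K (fun j => Cabs2 (cinner n (u j) x)).
Proof.
  rewrite qform_Pi, cinner_self. simpl. rewrite Csum_Re.
  unfold Rminus. f_equal. f_equal. apply rsum_ext; intros. rewrite Cmul_conj_self. reflexivity.
Qed.

Definition maskge (K : nat) (f : nat -> Cx) : nat -> Cx := fun j => if (j <? K)%nat then C0 else f j.
Definition masklt (K : nat) (f : nat -> Cx) : nat -> Cx := fun j => if (j <? K)%nat then f j else C0.

Lemma nrm_masklt n K f : (K <= n)%nat -> nrm n (masklt K f) = rsum K (fun j => Cabs2 (f j)).
Proof.
  intros H. unfold nrm, masklt. rewrite (rsum_trunc n K); [| auto |].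
  - apply rsum_ext; intros j Hj. replace (j <? K)%nat with true by (symmetry; apply Nat.ltb_lt; auto). reflexivity.
  - intros j Hj _. replace (j <? K)%nat with false by (symmetry; apply Nat.ltb_ge; auto). unfold Cabs2; simpl; ring.
Qed.

Lemma nrm_split n K f : (K <= n)%nat -> nrm n f = rsum K (fun j => Cabs2 (f j)) + nrm n (maskge K f).
Proof.
  intros H. rewrite <- (nrm_masklt n K f) by auto. unfold nrm. rewrite <- rsum_add. apply rsum_ext; intros j _.
  unfold masklt, maskge. destruct (j <? K)%nat; unfold Cabs2; simpl; ring.
Qed.

Lemma aux_div (T b c mA : R) : 0 < mA -> 0 <= T -> 0 <= c -> 0 <= b -> T ^ 2 <= c * b -> mA * c <= T ->
  T <= b / mA.
Proof.
  intros. apply Rmult_le_reg_r with mA; auto. unfold Rdiv. rewrite Rmult_assoc, Rinv_l, Rmult_1_r by lra.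
  destruct (Req_dec T 0) as [Z|NZ]. { subst. nra. }
  assert (T ^ 2 * mA <= T * b).
  { assert (T ^ 2 * mA <= c * b * mA) by (apply Rmult_le_compat_r; lra).
    assert (c * b * mA <= T * b) by nra. lra. }
  nra.
Qed.

Lemma qform_D n x y v w :
  qform n (Dmat x y) v w = Cadd (Cmul (cinner n v x) (cinner n y w)) (Cmul (cinner n v y) (cinner n x w)).
Proof.
  unfold qform, Dmat, cinner. rewrite !Csum_prod, <- Csum_add. apply Csum_ext; intros i _.
  rewrite <- Csum_add. apply Csum_ext; intros j _. cx.
Qed.

Lemma rsum_prod n m f g : rsum n (fun i => rsum m (fun j => f i * g j)) = rsum n f * rsum m g.
Proof.
  rewrite Rmult_comm, <- rsum_scal. apply rsum_ext; intros. rewrite Rmult_comm, <- rsum_scal.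
  apply rsum_ext; intros. ring.
Qed.

Section Core.
Variables (n Nn K : nat) (th : nat -> R) (S : nat -> nat -> Cx) (u : nat -> nat -> Cx) (lam : nat -> R).
Hypothesis Hon : orthonormal n n u.
Hypothesis Heig : forall j, (j < n)%nat -> is_eigvec n (BBs n Nn K th S) (lam j) (u j).
Hypothesis Hord : forall j, (j + 1 < K)%nat -> lam (j + 1)%nat <= lam j.
Hypothesis Hzero : forall j, (K <= j)%nat -> (j < n)%nat -> lam j = 0.
Hypothesis HKn : (K < n)%nat.
Hypothesis HN : (0 < Nn)%nat.
Hypothesis HSinj : forall y : nat -> Cx,
  (forall l, (l < Nn)%nat -> Csum K (fun k => Cmul (Cconj (S k l)) (y k)) = C0) ->
  forall k, (k < K)%nat -> y k = C0.

Let a := av n th.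

Lemma unit_u j : (j < n)%nat -> cinner n (u j) (u j) = C1.
Proof. intros. rewrite Hon by auto. rewrite Nat.eqb_refl. reflexivity. Qed.

Lemma lam_nrm j : (j < n)%nat -> lam j = nrm Nn (Bstar n Nn K th S (u j)).
Proof.
  intros Hj. rewrite <- quad_BBs.
  rewrite (cinner_ext n _ _ (u j) (fun i => Cscale (lam j) (u j i))); [| auto | intros i Hi; apply Heig; auto].
  rewrite cinner_scale_r, unit_u by auto. simpl. ring.
Qed.

Lemma lam_nonneg j : (j < n)%nat -> 0 <= lam j.
Proof. intros. rewrite lam_nrm by auto. apply nrm_nonneg. Qed.

Lemma lam0_perp j : (j < n)%nat -> lam j = 0 -> forall k, (k < K)%nat -> cinner n (a k) (u j) = C0.
Proof.
  intros Hj H0. rewrite lam_nrm in H0 by auto.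
  apply HSinj. intros l Hl.
  pose proof (nrm_zero _ _ H0 l Hl) as E. rewrite Bstar_formula in E.
  assert (Hs : 0 < sqrt (INR Nn)) by (apply sqrt_lt_R0; apply lt_0_INR; auto).
  destruct (Csum K _) as [p q] eqn:Eq. unfold Cscale in E. simpl in E. injection E as E1 E2.
  apply Cx_eq; simpl.
  - assert (/ sqrt (INR Nn) <> 0) by (apply Rinv_neq_0_compat; lra). nra.
  - assert (/ sqrt (INR Nn) <> 0) by (apply Rinv_neq_0_compat; lra). nra.
Qed.

Lemma perpK l : (K <= l)%nat -> (l < n)%nat -> forall k, (k < K)%nat -> cinner n (a k) (u l) = C0.
Proof. intros. apply lam0_perp; auto. Qed.

Lemma Adj_bound MA : 0 <= MA -> (forall c, nrm n (Avec K a c) <= MA * nrm K c) ->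
  forall x, nrm K (Adj n a x) <= MA * nrm n x.
Proof.
  intros HM0 HM x. set (y := Adj n a x).
  assert (E : cinner n (Avec K a y) x = cinner K y y) by (rewrite adjoint; reflexivity).
  rewrite cinner_self in E.
  assert (E2 : Re (cinner n (Avec K a y) x) = nrm K y) by (rewrite E; reflexivity).
  pose proof (CS n (Avec K a y) x) as HC. pose proof (Re_le_abs (cinner n (Avec K a y) x)) as HR.
  rewrite E2 in HR. pose proof (HM y). pose proof (nrm_nonneg K y). pose proof (nrm_nonneg n x).
  pose proof (nrm_nonneg n (Avec K a y)).
  destruct (Req_dec (nrm K y) 0) as [Z|NZ]. { rewrite Z. nra. }
  assert (nrm K y ^ 2 <= MA * nrm K y * nrm n x).
  { eapply Rle_trans. apply HR. eapply Rle_trans. apply HC. apply Rmult_le_compat_r; nra. }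
  nra.
Qed.

Variable MA : R.
Hypothesis HMA0 : 0 <= MA.
Hypothesis HMA : forall c, nrm n (Avec K a c) <= MA * nrm K c.
Hypothesis HMAK : INR (K - 1) * MA < INR K.
Hypothesis Hanorm : forall k, (k < K)%nat -> nrm n (a k) = 1.

Lemma lamK_pos : 0 < lam (K - 1)%nat.
Proof.
  destruct (lam_nonneg (K - 1) ltac:(lia)) as [P|Z]; [exact P|]. exfalso.
  assert (Hp : forall l, (K - 1 <= l)%nat -> (l < n)%nat -> forall k, (k < K)%nat -> cinner n (a k) (u l) = C0).
  { intros l Hl1 Hl2 k Hk. apply lam0_perp; auto.
    destruct (Nat.eq_dec l (K-1)) as [->|]; [auto|]. apply Hzero; lia. }
  assert (E1 : forall k, (k < K)%nat -> 1 = rsum (K - 1) (fun j => Cabs2 (cinner n (a k) (u j)))).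
  { intros k Hk. rewrite <- (Hanorm k Hk). rewrite (parseval n u Hon).
    rewrite (rsum_trunc n (K-1)); [| lia |].
    - apply rsum_ext; intros. rewrite cinner_conj, Cabs2_conj. reflexivity.
    - intros j Hj1 Hj2. rewrite cinner_conj, Hp by auto. unfold Cabs2; simpl; ring. }
  assert (E2 : INR K = rsum (K - 1) (fun j => nrm K (Adj n a (u j)))).
  { unfold nrm, Adj. rewrite <- rsum_swap.
    rewrite <- (rsum_ext K (fun _ => 1)). rewrite rsum_const; ring.
    intros k Hk. apply E1; auto. }
  assert (E3 : rsum (K - 1) (fun j => nrm K (Adj n a (u j))) <= rsum (K - 1) (fun _ => MA)).
  { apply rsum_le. intros j Hj. pose proof (Adj_bound MA HMA0 HMA (u j)).
    assert (nrm n (u j) = 1).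
    { pose proof (unit_u j ltac:(lia)) as U. rewrite cinner_self in U. injection U. auto. }
    nra. }
  rewrite rsum_const in E3. lra.
Qed.

Lemma lam_pos j : (j < K)%nat -> 0 < lam j.
Proof.
  intros Hj. assert (forall d, (d < K)%nat -> lam (K - 1)%nat <= lam (K - 1 - d)%nat).
  { induction d; intros Hd. replace (K - 1 - 0)%nat with (K-1)%nat by lia. lra.
    pose proof (Hord (K - 1 - Datatypes.S d) ltac:(lia)).
    replace (K - 1 - Datatypes.S d + 1)%nat with (K - 1 - d)%nat in H by lia.
    pose proof (IHd ltac:(lia)). lra. }
  pose proof (H (K - 1 - j)%nat ltac:(lia)). replace (K - 1 - (K - 1 - j))%nat with j in H0 by lia.
  pose proof lamK_pos. lra.
Qed.

Definition cvec (j : nat) : nat -> Cx := fun k => Cscale (/ lam j) (ccoef n Nn K th S (u j) k).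

Lemma u_range j : (j < K)%nat -> forall i, (i < n)%nat -> u j i = Avec K a (cvec j) i.
Proof.
  intros Hj i Hi. unfold cvec. rewrite <- Avec_scale. fold a. unfold a. rewrite <- BBs_formula.
  rewrite Heig by (auto || lia). pose proof (lam_pos j Hj).
  apply Cx_eq; simpl; field; lra.
Qed.

Lemma perp_small w : (forall k, (k < K)%nat -> cinner n (a k) w = C0) ->
  forall j, (j < K)%nat -> cinner n (u j) w = C0.
Proof.
  intros Hw j Hj. rewrite (cinner_ext n (u j) w (Avec K a (cvec j)) w).
  - rewrite adjoint. unfold cinner. apply Csum_zero. intros k Hk. unfold Adj. rewrite Hw by auto. cx.
  - apply u_range; auto.
  - auto.
Qed.

Definition q1v (x : nat -> Cx) : R := Re (qform n (PiMat K u) x x).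

Lemma q1_tail x : q1v x = nrm n (maskge K (fun j => cinner n (u j) x)).
Proof.
  unfold q1v. rewrite q1_formula. rewrite (parseval n u Hon x).
  fold (nrm n (fun j => cinner n (u j) x)). rewrite (nrm_split n K) by lia. ring.
Qed.

Lemma test_vector w x : (forall k, (k < K)%nat -> cinner n (a k) w = C0) ->
  Cabs2 (cinner n w x) <= nrm n w * q1v x.
Proof.
  intros Hw. rewrite q1_tail. rewrite (parseval_gen n u Hon w x).
  rewrite (parseval n u Hon w).
  fold (nrm n (fun j => cinner n (u j) w)).
  replace (Csum n (fun j => Cmul (Cconj (cinner n (u j) w)) (cinner n (u j) x)))
    with (cinner n (fun j => cinner n (u j) w) (maskge K (fun j => cinner n (u j) x))).
  - apply CS.
  - unfold cinner at 1. apply Csum_ext. intros j Hj. unfold maskge.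
    destruct (Nat.ltb_spec j K).
    + rewrite (perp_small w Hw j) by auto. cx.
    + reflexivity.
Qed.

Lemma upper_bound k x : (k < K)%nat ->
  Cabs2 (cinner n (a k) x) <= rsum K (fun j => Cabs2 (cinner n (u j) x)).
Proof.
  intros Hk. rewrite (parseval_gen n u Hon (a k) x).
  replace (Csum n (fun j => Cmul (Cconj (cinner n (u j) (a k))) (cinner n (u j) x)))
    with (cinner n (masklt K (fun j => cinner n (u j) (a k))) (masklt K (fun j => cinner n (u j) x))).
  - eapply Rle_trans. apply CS. rewrite !nrm_masklt by lia.
    assert (E : rsum K (fun j => Cabs2 (cinner n (u j) (a k))) = 1).
    { rewrite <- (Hanorm k Hk), (parseval n u Hon (a k)). fold (nrm n (fun j => cinner n (u j) (a k))).
      rewrite (nrm_split n K) by lia.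
      assert (Z : nrm n (maskge K (fun j => cinner n (u j) (a k))) = 0).
      { apply rsum_zero. intros j Hj. unfold maskge. destruct (Nat.ltb_spec j K). unfold Cabs2; simpl; ring.
        rewrite cinner_conj, perpK by auto. unfold Cabs2; simpl; ring. }
      rewrite Z. ring. }
    rewrite E. lra.
  - unfold cinner at 1. apply Csum_ext. intros j Hj. unfold masklt.
    destruct (Nat.ltb_spec j K).
    + reflexivity.
    + rewrite cinner_conj, perpK by auto. cx.
Qed.

Lemma cinner_comb (t : nat -> Cx) (y : nat -> Cx) z :
  (forall i, (i < n)%nat -> y i = Csum K (fun j => Cmul (t j) (u j i))) ->
  cinner n y z = Csum K (fun j => Cmul (Cconj (t j)) (cinner n (u j) z)).
Proof.
  intros Hy. unfold cinner.
  rewrite (Csum_ext n _ (fun i => Csum K (fun j => Cmul (Cconj (t j)) (Cmul (Cconj (u j i)) (z i))))).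
  - rewrite Csum_swap. apply Csum_ext; intros. rewrite Csum_mul_l. reflexivity.
  - intros i Hi. rewrite Hy, Csum_conj by auto. rewrite <- Csum_mul_r. apply Csum_ext; intros. cx.
Qed.

Lemma lower_bound mA x : 0 < mA -> (forall c, mA * nrm K c <= nrm n (Avec K a c)) ->
  rsum K (fun j => Cabs2 (cinner n (u j) x)) <= nrm K (Adj n a x) / mA.
Proof.
  intros HmA HA.
  set (t := fun j => cinner n (u j) x).
  set (c := fun k => Csum K (fun j => Cmul (t j) (cvec j k))).
  set (y := Avec K a c).
  assert (Hy : forall i, (i < n)%nat -> y i = Csum K (fun j => Cmul (t j) (u j i))).
  { intros i Hi. unfold y, Avec, c.
    rewrite (Csum_ext K (fun j => Cmul (t j) (u j i)) (fun j => Csum K (fun k => Cmul (a k i) (Cmul (t j) (cvec j k))))).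
    - rewrite Csum_swap. apply Csum_ext; intros. rewrite Csum_mul_l. reflexivity.
    - intros j Hj. rewrite u_range by auto. unfold Avec. rewrite <- Csum_mul_l. apply Csum_ext; intros. cx. }
  set (T := rsum K (fun j => Cabs2 (t j))).
  assert (E1 : Re (cinner n y x) = T).
  { rewrite (cinner_comb t y x Hy), Csum_Re. apply rsum_ext; intros. fold (t i). rewrite Cmul_conj_self. reflexivity. }
  assert (Hu : forall j, (j < K)%nat -> cinner n (u j) y = t j).
  { intros j Hj. rewrite cinner_conj, (cinner_comb t y (u j) Hy).
    rewrite (Csum_ext K _ (fun j' => Cmul (Cconj (t j')) (delta j' j))).
    - rewrite Csum_delta by auto. cx.
    - intros j' Hj'. rewrite Hon by lia. reflexivity. }
  assert (E2 : nrm n y = T).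
  { assert (H := cinner_comb t y y Hy). rewrite cinner_self in H. apply (f_equal Re) in H. simpl in H.
    rewrite H, Csum_Re. apply rsum_ext; intros j Hj.
    rewrite Hu by auto. rewrite Cmul_conj_self. reflexivity. }
  assert (E3 : cinner n y x = cinner K c (Adj n a x)) by (unfold y; apply adjoint).
  pose proof (CS K c (Adj n a x)) as HC. rewrite <- E3 in HC.
  pose proof (Re_le_abs (cinner n y x)) as HR. rewrite E1 in HR.
  pose proof (HA c) as HAc. fold y in HAc. rewrite E2 in HAc.
  pose proof (nrm_nonneg K c). pose proof (nrm_nonneg K (Adj n a x)).
  assert (HT : 0 <= T) by (rewrite <- E2; apply nrm_nonneg).
  apply (aux_div T (nrm K (Adj n a x)) (nrm K c) mA); auto.
  eapply Rle_trans. apply HR. exact HC.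
Qed.

Lemma gamma_lower (c s2 : R) (lamw : nat -> R) (wmin : R) d1 k :
  (k < K)%nat -> 0 <= wmin ->
  (forall j l, 0 <= vtheta c s2 K lamw j l) ->
  (forall j l, (j < K)%nat -> (K <= l)%nat -> wmin <= vtheta c s2 K lamw j l) ->
  wmin * q1v d1 <= gammaN n K c s2 lamw u d1 (a k).
Proof.
  intros Hk Hw Hv0 Hv.
  set (A := fun j => if (j <? K)%nat then Cabs2 (cinner n (u j) (a k)) else 0).
  set (B := fun l => Cabs2 (maskge K (fun j => cinner n (u j) d1) l)).
  assert (EA : rsum n A = 1).
  { unfold A. rewrite <- (Hanorm k Hk), (parseval n u Hon (a k)).
    fold (nrm n (fun j => cinner n (u j) (a k))). rewrite (nrm_split n K) by lia.
    assert (Z : nrm n (maskge K (fun j => cinner n (u j) (a k))) = 0).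
    { apply rsum_zero. intros j Hj. unfold maskge. destruct (Nat.ltb_spec j K). unfold Cabs2; simpl; ring.
      rewrite cinner_conj, perpK by auto. unfold Cabs2; simpl; ring. }
    rewrite Z, Rplus_0_r. rewrite (rsum_trunc n K); [| lia |].
    - apply rsum_ext; intros j Hj. destruct (Nat.ltb_spec j K); [reflexivity| lia].
    - intros j Hj _. destruct (Nat.ltb_spec j K); [lia| reflexivity]. }
  assert (EB : rsum n B = q1v d1) by (rewrite q1_tail; reflexivity).
  rewrite <- EB. replace (wmin * rsum n B) with (wmin * (rsum n A * rsum n B)) by (rewrite EA; ring).
  rewrite <- rsum_prod, <- rsum_scal. unfold gammaN. apply rsum_le; intros j Hj.
  rewrite <- rsum_scal. apply rsum_le; intros l Hl.
  pose proof (Hv0 j l) as V0. pose proof (Cabs2_nonneg (qform n (Dmat d1 (a k)) (u j) (u l))) as Q0.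
  assert (C00 : Cabs2 C0 = 0) by (unfold Cabs2; simpl; ring).
  unfold A, B, maskge. destruct (Nat.ltb_spec j K); destruct (Nat.ltb_spec l K).
  - rewrite C00. nra.
  - rewrite qform_D. rewrite (perpK l) by auto.
    replace (Cadd (Cmul (cinner n (u j) d1) C0) (Cmul (cinner n (u j) (a k)) (cinner n d1 (u l))))
      with (Cmul (cinner n (u j) (a k)) (cinner n d1 (u l))) by cx.
    rewrite Cabs2_mul, (cinner_conj n d1 (u l)), Cabs2_conj.
    pose proof (Hv j l ltac:(auto) ltac:(lia)).
    pose proof (Cabs2_nonneg (cinner n (u j) (a k))). pose proof (Cabs2_nonneg (cinner n (u l) d1)).
    apply Rmult_le_compat_r; [apply Rmult_le_pos; apply Cabs2_nonneg | lra].
  - rewrite C00. nra.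
  - pose proof (Cabs2_nonneg (cinner n (u l) d1)). nra.
Qed.

End Core.

Lemma Cexpi_add a b : Cexpi (a + b) = Cmul (Cexpi a) (Cexpi b).
Proof. unfold Cexpi. apply Cx_eq; simpl; [rewrite cos_plus | rewrite sin_plus]; ring. Qed.
Lemma Cexpi_conj_mul a b : Cmul (Cconj (Cexpi a)) (Cexpi b) = Cexpi (b - a).
Proof. unfold Cexpi. apply Cx_eq; simpl; [rewrite cos_minus | rewrite sin_minus]; ring. Qed.

Definition Sg (n : nat) (p : R) : Cx := Csum n (fun m => Cexpi (INR m * p)).
Definition Tg (n : nat) (p : R) : Cx := Csum n (fun m => Cscale (INR m) (Cexpi (INR m * p))).

Lemma geo1 n p : Cmul (Cadd C1 (Copp (Cexpi p))) (Sg n p) = Cadd C1 (Copp (Cexpi (INR n * p))).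
Proof.
  unfold Sg. induction n; simpl Csum.
  - simpl. unfold Cexpi. rewrite Rmult_0_l, cos_0, sin_0. cx.
  - rewrite S_INR. replace ((INR n + 1) * p) with (INR n * p + p) by ring. rewrite Cexpi_add.
    replace (Cmul (Cadd C1 (Copp (Cexpi p))) (Cadd (Csum n (fun m => Cexpi (INR m * p))) (Cexpi (INR n * p))))
     with (Cadd (Cmul (Cadd C1 (Copp (Cexpi p))) (Csum n (fun m => Cexpi (INR m * p))))
               (Cmul (Cadd C1 (Copp (Cexpi p))) (Cexpi (INR n * p)))) by cx.
    rewrite IHn. cx.
Qed.

Lemma geo2 n p : Cmul (Cadd C1 (Copp (Cexpi p))) (Tg n p) =
  Cadd (Cadd (Sg n p) (Copp C1)) (Copp (Cscale (INR n - 1) (Cexpi (INR n * p)))).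
Proof.
  unfold Tg, Sg. induction n; simpl Csum.
  - simpl. unfold Cexpi. rewrite Rmult_0_l, cos_0, sin_0. cx.
  - rewrite S_INR. replace ((INR n + 1) * p) with (INR n * p + p) by ring. rewrite Cexpi_add.
    replace (Cmul (Cadd C1 (Copp (Cexpi p))) (Cadd (Csum n (fun m => Cscale (INR m) (Cexpi (INR m * p)))) (Cscale (INR n) (Cexpi (INR n * p)))))
     with (Cadd (Cmul (Cadd C1 (Copp (Cexpi p))) (Csum n (fun m => Cscale (INR m) (Cexpi (INR m * p)))))
               (Cmul (Cadd C1 (Copp (Cexpi p))) (Cscale (INR n) (Cexpi (INR n * p))))) by cx.
    rewrite IHn. cx.
Qed.

Lemma inv_sqrt_sq n : (0 < n)%nat -> / sqrt (INR n) * / sqrt (INR n) = / INR n.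
Proof.
  intros H. rewrite <- Rinv_mult. rewrite sqrt_sqrt; auto. apply pos_INR.
Qed.

Lemma inner_steer n t t' : (0 < n)%nat ->
  cinner n (steer n t) (steer n t') = Cscale (/ INR n) (Sg n (t' - t)).
Proof.
  intros Hn. unfold cinner, steer, Sg. rewrite <- Csum_scale. apply Csum_ext; intros m _.
  rewrite Cconj_scale, Cmul_scale_l, Cmul_scale_r, Cexpi_conj_mul.
  unfold Cscale at 1 2 3. apply Cx_eq; simpl; rewrite <- (inv_sqrt_sq n Hn);
  replace (INR m * t' - INR m * t) with (INR m * (t' - t)) by ring; ring.
Qed.

Definition dvec (n Nn : nat) (t : R) : nat -> Cx := fun i => Cscale (/ INR Nn) (steer' n t i).

Lemma inner_steer_d n Nn t t' : (0 < n)%nat ->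
  cinner n (steer n t) (dvec n Nn t') = Cscale (/ INR Nn * / INR n) (Cmul (mkC 0 1) (Tg n (t' - t))).
Proof.
  intros Hn. unfold cinner, steer, dvec, steer', Tg.
  rewrite <- Csum_mul_l, <- Csum_scale. apply Csum_ext; intros m _.
  replace (Cexpi (INR m * t')) with (Cmul (Cexpi (INR m * t)) (Cexpi (INR m * (t' - t))))
    by (rewrite <- Cexpi_add; f_equal; ring).
  set (E := Cexpi (INR m * t)). set (F := Cexpi (INR m * (t' - t))).
  set (s := / sqrt (INR n)).
  transitivity (Cmul (Cmul (Cconj E) E) (Cscale (/ INR Nn * (s * s)) (Cmul (mkC 0 1) (Cscale (INR m) F)))).
  - cx.
  - rewrite Cmul_conj_self. assert (HE : Cabs2 E = 1) by apply Cabs2_expi. rewrite HE.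
    unfold s. rewrite (inv_sqrt_sq n Hn). cx.
Qed.

Lemma nrm_steer n t : (0 < n)%nat -> nrm n (steer n t) = 1.
Proof.
  intros Hn. unfold nrm, steer. rewrite (rsum_ext n _ (fun _ => / INR n)).
  - rewrite rsum_const. field. apply not_0_INR; lia.
  - intros m _. rewrite Cabs2_scale, Cabs2_expi. rewrite <- (inv_sqrt_sq n Hn). ring.
Qed.

Lemma sum_sq n : rsum n (fun m => INR m ^ 2) = INR n * (INR n - 1) * (2 * INR n - 1) / 6.
Proof. induction n. simpl; field. change (rsum (S n) ?f) with (rsum n f + f n). rewrite IHn, S_INR. field. Qed.

Lemma sum_lin n : rsum n (fun m => INR m) = INR n * (INR n - 1) / 2.
Proof. induction n. simpl; field. change (rsum (S n) ?f) with (rsum n f + f n). rewrite IHn, S_INR. field. Qed.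

Lemma nrm_dvec n Nn t : (0 < n)%nat -> (0 < Nn)%nat ->
  nrm n (dvec n Nn t) = (INR n - 1) * (2 * INR n - 1) / (6 * INR Nn ^ 2).
Proof.
  intros Hn HN. unfold nrm, dvec, steer'.
  rewrite (rsum_ext n _ (fun m => (/ INR Nn) ^ 2 * / INR n * INR m ^ 2)).
  - rewrite rsum_scal, sum_sq. field. split; apply not_0_INR; lia.
  - intros m _. rewrite !Cabs2_scale, Cabs2_mul, Cabs2_expi.
    replace ((/ sqrt (INR n)) ^ 2) with (/ sqrt (INR n) * / sqrt (INR n)) by ring.
    rewrite inv_sqrt_sq by auto. unfold Cabs2; simpl. ring.
Qed.

Lemma Tg0 n : Tg n 0 = mkC (INR n * (INR n - 1) / 2) 0.
Proof.
  unfold Tg. apply Cx_eq.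
  - rewrite Csum_Re. simpl. rewrite <- sum_lin. apply rsum_ext; intros. rewrite Rmult_0_r, cos_0. ring.
  - rewrite Csum_Im. simpl. apply rsum_zero; intros. rewrite Rmult_0_r, sin_0. ring.
Qed.

Lemma Cabs2_one_minus p : Cabs2 (Cadd C1 (Copp (Cexpi p))) = 2 - 2 * cos p.
Proof. unfold Cabs2, Cexpi; simpl. pose proof (sin2_cos2 p) as H. unfold Rsqr in H. nra. Qed.

Lemma Sg_exact n p : (2 - 2 * cos p) * Cabs2 (Sg n p) = 2 - 2 * cos (INR n * p).
Proof.
  rewrite <- !Cabs2_one_minus, <- Cabs2_mul, geo1. reflexivity.
Qed.

Lemma Sg_bound n p : 0 < 2 - 2 * cos p -> Cabs2 (Sg n p) <= 4 / (2 - 2 * cos p).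
Proof.
  intros HD. pose proof (Sg_exact n p). pose proof (COS_bound (INR n * p)).
  apply Rmult_le_reg_l with (2 - 2 * cos p); auto. unfold Rdiv. rewrite <- Rmult_assoc.
  rewrite (Rmult_comm _ 4), Rmult_assoc, Rinv_r by lra. lra.
Qed.

Lemma Tg_bound n p : 0 < 2 - 2 * cos p ->
  Cabs2 (Tg n p) <= (16 / (2 - 2 * cos p) + 4 + 2 * (INR n - 1) ^ 2) / (2 - 2 * cos p).
Proof.
  intros HD. set (D := 2 - 2 * cos p) in *.
  assert (E : D * Cabs2 (Tg n p) = Cabs2 (Cadd (Cadd (Sg n p) (Copp C1)) (Copp (Cscale (INR n - 1) (Cexpi (INR n * p)))))).
  { unfold D. rewrite <- Cabs2_one_minus, <- Cabs2_mul, geo2. reflexivity. }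
  pose proof (Cabs2_add_le (Cadd (Sg n p) (Copp C1)) (Copp (Cscale (INR n - 1) (Cexpi (INR n * p))))) as H1.
  rewrite Cabs2_opp, Cabs2_scale, Cabs2_expi in H1.
  pose proof (Cabs2_add_le (Sg n p) (Copp C1)) as H2. rewrite Cabs2_opp in H2.
  replace (Cabs2 C1) with 1 in H2 by (unfold Cabs2; simpl; ring).
  pose proof (Sg_bound n p HD) as H3. fold D in H3.
  apply Rmult_le_reg_l with D; auto. unfold Rdiv. rewrite (Rmult_comm (_ + _)), <- Rmult_assoc, Rinv_r by lra.
  rewrite E. lra.
Qed.

Definition ind (s L i : nat) : bool := andb (s <=? i)%nat (i <? s + L)%nat.

Lemma Csum_shift_gen s L F n :
  Csum n (fun i => if ind s L i then F (i - s)%nat else C0) = Csum (Nat.min L (n - s)) F.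
Proof.
  induction n.
  - simpl. replace (Nat.min L 0) with 0%nat by lia. reflexivity.
  - change (Csum (S n) ?f) with (Cadd (Csum n f) (f n)). rewrite IHn. unfold ind.
    destruct (Nat.leb_spec s n); destruct (Nat.ltb_spec n (s + L)); cbn [andb].
    + replace (Nat.min L (S n - s)) with (S (Nat.min L (n - s))) by lia.
      replace (Nat.min L (n - s)) with (n - s)%nat by lia. reflexivity.
    + replace (Nat.min L (S n - s)) with (Nat.min L (n - s)) by lia. cx.
    + replace (Nat.min L (S n - s)) with (Nat.min L (n - s)) by lia. cx.
    + replace (Nat.min L (S n - s)) with (Nat.min L (n - s)) by lia. cx.
Qed.

Lemma rsum_shift_gen s L F n :
  rsum n (fun i => if ind s L i then F (i - s)%nat else 0) = rsum (Nat.min L (n - s)) F.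
Proof.
  induction n.
  - simpl. replace (Nat.min L 0) with 0%nat by lia. reflexivity.
  - change (rsum (S n) ?f) with (rsum n f + f n). rewrite IHn. unfold ind.
    destruct (Nat.leb_spec s n); destruct (Nat.ltb_spec n (s + L)); cbn [andb].
    + replace (Nat.min L (S n - s)) with (S (Nat.min L (n - s))) by lia.
      replace (Nat.min L (n - s)) with (n - s)%nat by lia. reflexivity.
    + replace (Nat.min L (S n - s)) with (Nat.min L (n - s)) by lia. ring.
    + replace (Nat.min L (S n - s)) with (Nat.min L (n - s)) by lia. ring.
    + replace (Nat.min L (S n - s)) with (Nat.min L (n - s)) by lia. ring.
Qed.

Definition shv (s L : nat) (f : nat -> Cx) : nat -> Cx :=
  fun i => if ind s L i then f (i - s)%nat else C0.

Lemma cinner_shv n s L f x : (s + L <= n)%nat ->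
  cinner n (shv s L f) x = Csum L (fun m => Cmul (Cconj (f m)) (x (m + s)%nat)).
Proof.
  intros H. unfold cinner, shv.
  pose (F := fun m => Cmul (Cconj (f m)) (x (m + s)%nat)).
  transitivity (Csum n (fun i => if ind s L i then F (i - s)%nat else C0)).
  - apply Csum_ext. intros i _. unfold ind, F. destruct (Nat.leb_spec s i); destruct (Nat.ltb_spec i (s + L)); cbn [andb]; try cx.
    replace (i - s + s)%nat with i by lia. reflexivity.
  - rewrite Csum_shift_gen. f_equal. lia.
Qed.

Lemma nrm_shv n s L f : (s + L <= n)%nat -> nrm n (shv s L f) = rsum L (fun m => Cabs2 (f m)).
Proof.
  intros H. unfold nrm, shv.
  pose (F := fun m => Cabs2 (f m)).
  transitivity (rsum n (fun i => if ind s L i then F (i - s)%nat else 0)).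
  - apply rsum_ext. intros i _. destruct (ind s L i); [reflexivity| unfold Cabs2; simpl; ring].
  - rewrite rsum_shift_gen. f_equal. lia.
Qed.

Lemma cinner_add_l n f g x : cinner n (fun i => Cadd (f i) (g i)) x = Cadd (cinner n f x) (cinner n g x).
Proof. unfold cinner. rewrite <- Csum_add. apply Csum_ext; intros. cx. Qed.
Lemma cinner_mul_l n c f x : cinner n (fun i => Cmul c (f i)) x = Cmul (Cconj c) (cinner n f x).
Proof. unfold cinner. rewrite <- Csum_mul_l. apply Csum_ext; intros. cx. Qed.

Section TestVec.
Variables (n L h : nat) (t t' : R).
Hypothesis HL : (2 * h + L <= n)%nat.
Let E := Cexpi (INR h * t).
Let E' := Cexpi (INR h * t').
Let p1 := Cadd E E'.
Let p0 := Cmul E E'.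
Definition gv : nat -> Cx := fun m => Cexpi (INR (m + h) * t).
Definition wv : nat -> Cx := fun i =>
  Cadd (shv (2 * h) L gv i) (Cadd (Cmul (Copp (Cconj p1)) (shv h L gv i)) (Cmul (Cconj p0) (shv 0 L gv i))).

Lemma cinner_wv x : cinner n wv x =
  Csum L (fun m => Cmul (Cconj (gv m)) (Cadd (x (m + 2 * h)%nat) (Cadd (Cmul (Copp p1) (x (m + h)%nat)) (Cmul p0 (x (m + 0)%nat))))).
Proof.
  unfold wv. rewrite cinner_add_l, cinner_add_l, !cinner_mul_l.
  rewrite !cinner_shv by lia.
  rewrite <- !Csum_mul_l, <- !Csum_add. apply Csum_ext; intros. cx.
Qed.

Lemma INR_shift m k : INR (m + k) = INR m + INR k.
Proof. apply plus_INR. Qed.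

Lemma wv_perp t2 : (t2 = t \/ t2 = t') -> (0 < n)%nat -> cinner n wv (steer n t2) = C0.
Proof.
  intros Ht Hn. rewrite cinner_wv. apply Csum_zero. intros m Hm.
  unfold steer. rewrite Nat.add_0_r, !INR_shift, mult_INR. replace (INR 2) with 2 by (simpl; ring).
  replace ((INR m + 2 * INR h) * t2) with (INR m * t2 + INR h * t2 + INR h * t2) by ring.
  replace ((INR m + INR h) * t2) with (INR m * t2 + INR h * t2) by ring.
  rewrite !Cexpi_add. unfold p1, p0, E, E'.
  destruct Ht as [-> | ->]; cx.
Qed.

Lemma wv_d1 Nn : (0 < n)%nat ->
  cinner n wv (dvec n Nn t) =
  Cscale (INR L * (/ INR Nn * / sqrt (INR n))) (Cmul (mkC 0 (INR h)) (Cadd E (Copp E'))).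
Proof.
  intros Hn. rewrite cinner_wv.
  rewrite (Csum_ext L _ (fun _ => Cscale (/ INR Nn * / sqrt (INR n)) (Cmul (mkC 0 (INR h)) (Cadd E (Copp E'))))).
  - induction L; simpl Csum. simpl; cx. rewrite IHn0 by lia. rewrite S_INR. cx.
  - intros m Hm. unfold dvec, steer', gv. rewrite Nat.add_0_r, !INR_shift, mult_INR. replace (INR 2) with 2 by (simpl; ring).
    replace ((INR m + 2 * INR h) * t) with (INR m * t + INR h * t + INR h * t) by ring.
    replace ((INR m + INR h) * t) with (INR m * t + INR h * t) by ring.
    rewrite !Cexpi_add. unfold p1, p0. fold E.
    set (Z := Cexpi (INR m * t)).
    transitivity (Cmul (Cmul (Cconj Z) Z) (Cmul (Cmul (Cconj E) E)
        (Cscale (/ INR Nn * / sqrt (INR n)) (Cmul (mkC 0 (INR h)) (Cadd E (Copp E')))))).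
    + cx.
    + rewrite !Cmul_conj_self. unfold Z, E. rewrite !Cabs2_expi. cx.
Qed.

Lemma nrm_wv : nrm n wv <= 22 * INR L.
Proof.
  assert (Hg : rsum L (fun m => Cabs2 (gv m)) = INR L).
  { rewrite (rsum_ext L _ (fun _ => 1)). rewrite rsum_const; ring. intros; unfold gv; apply Cabs2_expi. }
  assert (H2 := nrm_shv n (2 * h) L gv ltac:(lia)).
  assert (H1 := nrm_shv n h L gv ltac:(lia)).
  assert (H0 := nrm_shv n 0 L gv ltac:(lia)).
  rewrite Hg in H0, H1, H2.
  assert (Hp1 : Cabs2 (Copp (Cconj p1)) <= 4).
  { rewrite Cabs2_opp, Cabs2_conj. unfold p1. eapply Rle_trans. apply Cabs2_add_le.
    unfold E, E'. rewrite !Cabs2_expi. lra. }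
  assert (Hp0 : Cabs2 (Cconj p0) = 1).
  { rewrite Cabs2_conj. unfold p0. rewrite Cabs2_mul. unfold E, E'. rewrite !Cabs2_expi. ring. }
  unfold nrm, wv.
  eapply Rle_trans.
  - apply (rsum_le n _ (fun i => 2 * Cabs2 (shv (2 * h) L gv i) + 16 * Cabs2 (shv h L gv i) + 4 * Cabs2 (shv 0 L gv i))).
    intros i _. eapply Rle_trans. apply Cabs2_add_le.
    pose proof (Cabs2_add_le (Cmul (Copp (Cconj p1)) (shv h L gv i)) (Cmul (Cconj p0) (shv 0 L gv i))).
    rewrite !Cabs2_mul, Hp0 in H.
    pose proof (Cabs2_nonneg (shv h L gv i)).
    assert (Cabs2 (Copp (Cconj p1)) * Cabs2 (shv h L gv i) <= 4 * Cabs2 (shv h L gv i)) by (apply Rmult_le_compat_r; lra).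
    lra.
  - rewrite !rsum_add, !rsum_scal. unfold nrm in H0, H1, H2. rewrite H0, H1, H2. lra.
Qed.

End TestVec.

Lemma nat_unbounded (r : R) : exists n : nat, r < INR n.
Proof.
  destruct (archimed r) as [H1 _].
  destruct (Z_le_gt_dec 0 (up r)) as [Hz|Hz].
  - exists (Z.to_nat (up r)). rewrite INR_IZR_INZ, Z2Nat.id; auto.
  - exists 0%nat. simpl. apply Z.gt_lt in Hz. apply IZR_lt in Hz. lra.
Qed.

Lemma cv_const (r : R) : Un_cv (fun _ => r) r.
Proof. intros e He. exists 0%nat. intros. unfold Rdist. rewrite Rminus_eq_0, Rabs_R0. auto. Qed.

Lemma cv_ev_ext (u v : nat -> R) l N0 : (forall N, (N0 <= N)%nat -> u N = v N) -> Un_cv u l -> Un_cv v l.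
Proof.
  intros He Hu e Hpos. destruct (Hu e Hpos) as [N1 HN1]. exists (Nat.max N0 N1). intros N HN.
  rewrite <- He by lia. apply HN1. lia.
Qed.

Lemma cv_squeeze (lo x hi : nat -> R) l N0 :
  (forall N, (N0 <= N)%nat -> lo N <= x N <= hi N) -> Un_cv lo l -> Un_cv hi l -> Un_cv x l.
Proof.
  intros H Hl Hh e He. destruct (Hl e He) as [N1 H1]. destruct (Hh e He) as [N2 H2].
  exists (Nat.max N0 (Nat.max N1 N2)). intros N HN.
  specialize (H N ltac:(lia)). specialize (H1 N ltac:(lia)). specialize (H2 N ltac:(lia)).
  unfold Rdist in *. apply Rabs_def2 in H1. apply Rabs_def2 in H2. apply Rabs_def1; lra.
Qed.

Lemma cv_ev_gt (u : nat -> R) l a : Un_cv u l -> a < l -> exists N0, forall N, (N0 <= N)%nat -> a < u N.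
Proof.
  intros Hu Ha. destruct (Hu (l - a) ltac:(lra)) as [N0 H]. exists N0. intros N HN.
  specialize (H N HN). unfold Rdist in H. apply Rabs_def2 in H. lra.
Qed.

Lemma cv_ev_lt (u : nat -> R) l a : Un_cv u l -> l < a -> exists N0, forall N, (N0 <= N)%nat -> u N < a.
Proof.
  intros Hu Ha. destruct (Hu (a - l) ltac:(lra)) as [N0 H]. exists N0. intros N HN.
  specialize (H N HN). unfold Rdist in H. apply Rabs_def2 in H. lra.
Qed.

Lemma cv_inv (u : nat -> R) l : Un_cv u l -> l <> 0 -> Un_cv (fun N => / u N) (/ l).
Proof.
  intros Hu Hl. apply (continuity_seq (fun x => / x) u l); auto.
  apply (continuity_pt_inv id l); auto. apply derivable_continuous_pt, derivable_pt_id.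
Qed.

Lemma cv_sqrt0 (u : nat -> R) : Un_cv u 0 -> Un_cv (fun N => sqrt (u N)) 0.
Proof.
  intros Hu. rewrite <- sqrt_0. apply (continuity_seq sqrt u 0); auto. apply continuity_pt_sqrt. lra.
Qed.

Lemma cv_scal (u : nat -> R) l r : Un_cv u l -> Un_cv (fun N => r * u N) (r * l).
Proof. intros. apply CV_mult; auto. apply cv_const. Qed.

Lemma cv_inv_INR : Un_cv (fun N => / INR N) 0.
Proof.
  intros e He. destruct (nat_unbounded (/ e)) as [N0 HN0]. exists (S N0). intros N HN.
  unfold Rdist. rewrite Rminus_0_r.
  assert (HNp : 0 < INR N) by (apply lt_0_INR; lia).
  assert (INR N0 < INR N) by (apply lt_INR; lia).
  rewrite Rabs_right by (left; apply Rinv_0_lt_compat; auto).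
  assert (H1 : / e < INR N) by lra.
  assert (Hie : 0 < / e) by (apply Rinv_0_lt_compat; auto).
  apply Rinv_lt_contravar in H1; [| nra]. rewrite Rinv_inv in H1. exact H1.
Qed.

Lemma cv_rsum K (f : nat -> nat -> R) (l : nat -> R) :
  (forall i, (i < K)%nat -> Un_cv (f i) (l i)) -> Un_cv (fun N => rsum K (fun i => f i N)) (rsum K l).
Proof.
  induction K; intros H.
  - simpl. apply cv_const.
  - simpl. apply CV_plus. apply IHK; intros; apply H; lia. apply H; lia.
Qed.

Lemma ev_forall_lt K (P : nat -> nat -> Prop) :
  (forall i, (i < K)%nat -> exists N0, forall N, (N0 <= N)%nat -> P i N) ->
  exists N0, forall N, (N0 <= N)%nat -> forall i, (i < K)%nat -> P i N.
Proof.
  induction K; intros H.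
  - exists 0%nat. intros; lia.
  - destruct IHK as [N1 H1]. intros; apply H; lia.
    destruct (H K ltac:(lia)) as [N2 H2]. exists (Nat.max N1 N2). intros N HN i Hi.
    destruct (Nat.eq_dec i K) as [->|]. apply H2; lia. apply H1; lia.
Qed.

Lemma cv_unique_limit_pos (u : nat -> R) l : Un_cv u l -> 0 < l ->
  exists e, 0 < e /\ exists N0, forall N, (N0 <= N)%nat -> e <= u N.
Proof.
  intros Hu Hl. destruct (cv_ev_gt u l (l/2) Hu ltac:(lra)) as [N0 H]. exists (l/2). split. lra.
  exists N0. intros. left. auto.
Qed.

Lemma abs_le_inv x b : Rabs x <= b -> - b <= x <= b.
Proof. intros H. unfold Rabs in H. destruct (Rcase_abs x); lra. Qed.

Lemma div_le_cross a b c d : 0 < b -> 0 < d -> a * d <= c * b -> a / b <= c / d.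
Proof.
  intros Hb Hd H.
  replace (a / b) with (a * d * / (b * d)) by (field; lra).
  replace (c / d) with (c * b * / (b * d)) by (field; lra).
  apply Rmult_le_compat_r; auto. left. apply Rinv_0_lt_compat. nra.
Qed.

Lemma w1_bound s2 sig lam Lmax : 0 < s2 -> 0 <= sig -> sig < lam -> lam <= Lmax ->
  s2 / (4 * Lmax) <= s2 * (lam + s2) / (4 * (lam ^ 2 - sig ^ 2)).
Proof.
  intros. assert (0 < lam ^ 2 - sig ^ 2) by nra.
  assert (lam * lam <= lam * Lmax) by (apply Rmult_le_compat_l; lra).
  assert (0 <= s2 * Lmax) by nra.
  apply div_le_cross; try nra.
Qed.

Lemma vtheta_props c s2 K lamw Lmax : 0 < c -> 0 < s2 ->
  (forall j, (j < K)%nat -> s2 * sqrt c < lamw j /\ lamw j <= Lmax) ->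
  (forall j l, 0 <= vtheta c s2 K lamw j l) /\
  (forall j l, (j < K)%nat -> (K <= l)%nat -> s2 / (4 * Lmax) <= vtheta c s2 K lamw j l).
Proof.
  intros Hc Hs H.
  set (sig := s2 * sqrt c) in *.
  assert (Hsig : 0 < sig) by (unfold sig; apply Rmult_lt_0_compat; auto; apply sqrt_lt_R0; auto).
  assert (Hsc : s2 ^ 2 * c = sig ^ 2) by (unfold sig; replace ((s2 * sqrt c) ^ 2) with (s2 ^ 2 * (sqrt c * sqrt c)) by ring; rewrite sqrt_sqrt; lra).
  assert (HL : forall j, (j < K)%nat -> 0 < Lmax) by (intros j Hj; destruct (H j Hj); lra).
  split.
  - intros j l. unfold vtheta. rewrite Hsc.
    destruct (Nat.ltb_spec j K); destruct (Nat.ltb_spec l K).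
    + destruct (H j) as [A1 _]; auto. destruct (H l) as [A2 _]; auto. fold sig in A1, A2.
      assert (0 < lamw j ^ 2 - sig ^ 2) by nra. assert (0 < lamw l ^ 2 - sig ^ 2) by nra.
      assert (0 < lamw j * lamw l - sig ^ 2) by nra.
      apply Rmult_le_pos.
      * apply Rmult_le_pos; [apply Rmult_le_pos|]; nra.
      * left. apply Rinv_0_lt_compat. apply Rmult_lt_0_compat; [apply Rmult_lt_0_compat|]; nra.
    + destruct (H j) as [A1 _]; auto. fold sig in A1. assert (0 < lamw j ^ 2 - sig ^ 2) by nra.
      apply Rmult_le_pos. nra. left. apply Rinv_0_lt_compat. lra.
    + destruct (H l) as [A1 _]; auto. fold sig in A1. assert (0 < lamw l ^ 2 - sig ^ 2) by nra.
      apply Rmult_le_pos. nra. left. apply Rinv_0_lt_compat. lra.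
    + lra.
  - intros j l Hj Hl. unfold vtheta. rewrite Hsc.
    replace (j <? K)%nat with true by (symmetry; apply Nat.ltb_lt; auto).
    replace (l <? K)%nat with false by (symmetry; apply Nat.ltb_ge; auto).
    destruct (H j Hj). apply w1_bound; auto; lra.
Qed.

Lemma Sinj_of_Gram Nn K S mG : 0 < mG ->
  (forall w, mG * nrm K w <= Re (cinner K w (matvec K (Gram Nn K S) w))) ->
  forall y : nat -> Cx,
  (forall l, (l < Nn)%nat -> Csum K (fun k => Cmul (Cconj (S k l)) (y k)) = C0) ->
  forall k, (k < K)%nat -> y k = C0.
Proof.
  intros HmG Hlow y Hy. apply nrm_zero.
  assert (Hz : forall i, (i < K)%nat -> matvec K (Gram Nn K S) y i = C0).
  { intros i Hi. unfold matvec, Gram.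
    transitivity (Cscale (/ INR Nn) (Csum Nn (fun l => Cmul (S i l) (Csum K (fun j => Cmul (Cconj (S j l)) (y j)))))).
    - rewrite <- Csum_scale.
      rewrite (Csum_ext K _ (fun j => Csum Nn (fun l => Cscale (/ INR Nn) (Cmul (S i l) (Cmul (Cconj (S j l)) (y j)))))).
      + rewrite Csum_swap. apply Csum_ext; intros l _. rewrite <- Csum_mul_l, Csum_scale. reflexivity.
      + intros j _. rewrite Cmul_scale_l, <- Csum_mul_r, <- Csum_scale. apply Csum_ext; intros; cx.
    - rewrite (Csum_zero Nn). cx. intros l Hl. rewrite Hy by auto. cx. }
  assert (E : cinner K y (matvec K (Gram Nn K S) y) = C0).
  { unfold cinner. apply Csum_zero. intros i Hi. rewrite Hz by auto. cx. }
  specialize (Hlow y). rewrite E in Hlow. simpl in Hlow. pose proof (nrm_nonneg K y).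
  nra.
Qed.

Lemma herm_move K H x y : (forall i j, H i j = Cconj (H j i)) ->
  cinner K x (matvec K H y) = cinner K (matvec K H x) y.
Proof.
  intros Hh. unfold cinner, matvec.
  rewrite (Csum_ext K (fun i => Cmul (Cconj (x i)) (Csum K (fun j => Cmul (H i j) (y j))))
     (fun i => Csum K (fun j => Cmul (Cmul (H i j) (Cconj (x i))) (y j)))).
  - rewrite Csum_swap. apply Csum_ext; intros j _. rewrite Csum_conj, <- Csum_mul_r.
    apply Csum_ext; intros i _. rewrite (Hh j i). cx.
  - intros i _. rewrite <- Csum_mul_l. apply Csum_ext; intros; cx.
Qed.

Lemma Gram_herm Nn K S : forall i j, Gram Nn K S i j = Cconj (Gram Nn K S j i).
Proof.
  intros i j. unfold Gram. rewrite Cconj_scale, Csum_conj. f_equal. apply Csum_ext; intros; cx.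
Qed.

Lemma cinner_scale_l n r x y : cinner n (fun i => Cscale r (x i)) y = Cscale r (cinner n x y).
Proof. unfold cinner. rewrite <- Csum_scale. apply Csum_ext; intros; cx. Qed.

Lemma eig_lower K (H : nat -> nat -> Cx) (v : nat -> nat -> Cx) (mu : nat -> R) m :
  orthonormal K K v -> (forall k, (k < K)%nat -> is_eigvec K H (mu k) (v k)) ->
  (forall i j, H i j = Cconj (H j i)) -> (forall k, (k < K)%nat -> m <= mu k) ->
  forall w, m * nrm K w <= Re (cinner K w (matvec K H w)).
Proof.
  intros Hon Heig Hh Hm w.
  rewrite (parseval_gen K v Hon w (matvec K H w)), Csum_Re.
  rewrite (parseval K v Hon w), <- rsum_scal. apply rsum_le. intros k Hk.
  rewrite herm_move by auto.
  rewrite (cinner_ext K (matvec K H (v k)) w (fun i => Cscale (mu k) (v k i)) w); [| intros; apply Heig; auto | auto].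
  rewrite cinner_scale_l.
  replace (Re (Cmul (Cconj (cinner K (v k) w)) (Cscale (mu k) (cinner K (v k) w))))
    with (mu k * Re (Cmul (Cconj (cinner K (v k) w)) (cinner K (v k) w))) by (simpl; ring).
  rewrite Cmul_conj_self. simpl. apply Rmult_le_compat_r. apply Cabs2_nonneg. auto.
Qed.

Lemma qform_near_const K H eps w : 0 <= eps ->
  (forall i j, (i < K)%nat -> (j < K)%nat -> Cabs2 (Cadd (H i j) (Copp (delta i j))) <= eps ^ 2) ->
  Rabs (Re (cinner K w (matvec K H w)) - nrm K w) <= INR K * eps * nrm K w.
Proof.
  intros He Hb. eapply Rle_trans. apply (qform_near K H (fun _ _ => eps) w). intros; split; auto.
  right.
  rewrite (rsum_ext K _ (fun i => INR K * (eps / 2) * Cabs2 (w i) + eps / 2 * nrm K w)).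
  - rewrite rsum_add, rsum_scal, rsum_const. unfold nrm. field.
  - intros i _. transitivity (rsum K (fun j => eps / 2 * Cabs2 (w i) + eps / 2 * Cabs2 (w j))).
    + apply rsum_ext; intros; field.
    + rewrite rsum_add, rsum_const, rsum_scal. unfold nrm. ring.
Qed.

Lemma Cadd_opp0 z : Cadd z (Copp C0) = z.
Proof. cx. Qed.

Lemma qform_near_2 H r w : 0 <= r -> H 0%nat 0%nat = C1 -> H 1%nat 1%nat = C1 ->
  Cabs2 (H 0%nat 1%nat) <= r ^ 2 -> Cabs2 (H 1%nat 0%nat) <= r ^ 2 ->
  Rabs (Re (cinner 2 w (matvec 2 H w)) - nrm 2 w) <= r * nrm 2 w.
Proof.
  intros Hr H00 H11 H01 H10.
  eapply Rle_trans. apply (qform_near 2 H (fun i j => if Nat.eqb i j then 0 else r) w).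
  - intros i j Hi Hj. destruct i as [|[|i]]; destruct j as [|[|j]]; try lia; unfold delta; simpl.
    + rewrite H00. split; [lra|]. unfold Cabs2; simpl. lra.
    + rewrite Cadd_opp0. split; auto.
    + rewrite Cadd_opp0. split; auto.
    + rewrite H11. split; [lra|]. unfold Cabs2; simpl. lra.
  - right. unfold nrm. simpl. field.
Qed.

Lemma Npack n Nn K th S u lam
  (HK : (1 <= K)%nat) (Hon : orthonormal n n u)
  (Heig : forall j, (j < n)%nat -> is_eigvec n (BBs n Nn K th S) (lam j) (u j))
  (Hord : forall j, (j + 1 < K)%nat -> lam (j + 1)%nat <= lam j)
  (Hzero : forall j, (K <= j)%nat -> (j < n)%nat -> lam j = 0)
  (HKn : (K < n)%nat) (HN : (0 < Nn)%nat)
  mG (HmG : 0 < mG) (HG : forall w, mG * nrm K w <= Re (cinner K w (matvec K (Gram Nn K S) w)))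
  rho (Hr0 : 0 <= rho) (Hr1 : rho < 1) (HrK : INR (K - 1) * (1 + rho) < INR K)
  (Hr : forall c, Rabs (nrm n (Avec K (av n th) c) - nrm K c) <= rho * nrm K c) :
  (forall k x, (k < K)%nat -> q1v n K u x <= nrm n x - Cabs2 (cinner n (av n th k) x)) /\
  (forall x, nrm n x - nrm K (Adj n (av n th) x) / (1 - rho) <= q1v n K u x) /\
  (forall w x, (forall k, (k < K)%nat -> cinner n (av n th k) w = C0) ->
      Cabs2 (cinner n w x) <= nrm n w * q1v n K u x) /\
  (forall c s2 lamw wmin k d1, (k < K)%nat -> 0 <= wmin ->
      (forall j l, 0 <= vtheta c s2 K lamw j l) ->
      (forall j l, (j < K)%nat -> (K <= l)%nat -> wmin <= vtheta c s2 K lamw j l) ->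
      wmin * q1v n K u d1 <= gammaN n K c s2 lamw u d1 (av n th k)).
Proof.
  assert (HSinj := Sinj_of_Gram Nn K S mG HmG HG).
  assert (Hanorm : forall k, (k < K)%nat -> nrm n (av n th k) = 1).
  { intros. unfold av. apply nrm_steer. lia. }
  assert (HMA : forall c, nrm n (Avec K (av n th) c) <= (1 + rho) * nrm K c).
  { intros c. specialize (Hr c). apply abs_le_inv in Hr. lra. }
  assert (HmA : forall c, (1 - rho) * nrm K c <= nrm n (Avec K (av n th) c)).
  { intros c. specialize (Hr c). apply abs_le_inv in Hr. lra. }
  assert (HMA0 : 0 <= 1 + rho) by lra.
  split; [|split; [|split]].
  - intros k x Hk. unfold q1v. rewrite q1_formula.
    pose proof (upper_bound n Nn K th S u lam Hon Heig Hzero HKn HN HSinj Hanorm k x Hk). lra.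
  - intros x. unfold q1v. rewrite q1_formula.
    pose proof (lower_bound n Nn K th S u lam Hon Heig Hord Hzero HKn HN HSinj (1 + rho) HMA0 HMA HrK Hanorm
       (1 - rho) x ltac:(lra) HmA). lra.
  - intros w x Hw. apply (test_vector n Nn K th S u lam Hon Heig Hord Hzero HKn HN HSinj (1 + rho) HMA0 HMA HrK Hanorm w x Hw).
  - intros c s2 lamw wmin k d1 Hk Hw Hv0 Hv.
    apply (gamma_lower n Nn K th S u lam Hon Heig Hzero HKn HN HSinj Hanorm c s2 lamw wmin d1 k Hk Hw Hv0 Hv).
Qed.

Lemma rsum_delta K k v : (k < K)%nat -> rsum K (fun l => if Nat.eqb l k then v else 0) = v.
Proof.
  induction K; intros Hk; [lia|]. change (rsum (S K) ?f) with (rsum K f + f K).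
  destruct (Nat.eq_dec k K) as [->|Hne].
  - rewrite Nat.eqb_refl. rewrite rsum_zero. ring. intros i Hi.
    destruct (Nat.eqb_spec i K); [lia|reflexivity].
  - rewrite IHK by lia. destruct (Nat.eqb_spec K k); [lia|ring].
Qed.

Lemma cv_le0 (u ub : nat -> R) N0 : (forall N, (N0 <= N)%nat -> 0 <= u N <= ub N) -> Un_cv ub 0 -> Un_cv u 0.
Proof. intros H Hub. apply (cv_squeeze (fun _ => 0) u ub 0 N0); auto. apply cv_const. Qed.

Lemma cos1_2PI x : cos x = 1 -> exists z : Z, x = 2 * PI * IZR z.
Proof.
  intros H. assert (Hs : sin (x / 2) = 0).
  { pose proof (cos_2a_sin (x / 2)) as E. replace (2 * (x / 2)) with x in E by field.
    rewrite H in E. assert (sin (x/2) * sin (x/2) = 0) by lra. nra. }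
  destruct (sin_eq_0_0 _ Hs) as [z Hz]. exists z. lra.
Qed.

Lemma chain_le K (f : nat -> R) : (forall j, (j + 1 < K)%nat -> f (j + 1)%nat <= f j) ->
  forall j j', (j <= j')%nat -> (j' < K)%nat -> f j' <= f j.
Proof.
  intros H j j' Hjj'. induction j' as [|j' IH]; intros Hj'.
  - replace j with 0%nat by lia. lra.
  - destruct (Nat.eq_dec j (S j')) as [->|Hne]; [lra|].
    pose proof (H j' ltac:(lia)). replace (j' + 1)%nat with (S j') in H0 by lia.
    pose proof (IH ltac:(lia) ltac:(lia)). lra.
Qed.

Lemma Cabs2_Cscale_inner r z : Cabs2 (Cscale r (Cmul (mkC 0 1) z)) = r ^ 2 * Cabs2 z.
Proof. unfold Cabs2; simpl. ring. Qed.

Lemma D_pos x : (forall z : Z, x <> 2 * PI * IZR z) -> 0 < 2 - 2 * cos x.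
Proof.
  intros H. pose proof (COS_bound x). destruct (Req_dec (cos x) 1) as [E|E].
  - destruct (cos1_2PI x E) as [z Hz]. exfalso. apply (H z). auto.
  - lra.
Qed.

Section Main.
Variables (c s2 : R) (K : nat) (M : nat -> nat) (th : nat -> nat -> R)
  (S : nat -> nat -> nat -> Cx) (u : nat -> nat -> nat -> Cx) (lamN : nat -> nat -> R).
Hypothesis Hc : 0 < c.
Hypothesis Hs2 : 0 < s2.
Hypothesis HK : (1 <= K)%nat.
Hypothesis HM : forall N, (K < M N)%nat.
Hypothesis HMc : Un_cv (fun N => INR (M N) / INR N) c.
Hypothesis Hu : forall N,
     orthonormal (M N) (M N) (u N) /\
     (forall j, (j < M N)%nat ->
        is_eigvec (M N) (BBs (M N) N K (th N) (S N)) (lamN N j) (u N j)) /\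
     (forall j, (j + 1 < K)%nat -> lamN N (j + 1)%nat <= lamN N j) /\
     (forall j, (K <= j)%nat -> (j < M N)%nat -> lamN N j = 0).

Lemma Mpos N : (0 < M N)%nat.
Proof. pose proof (HM N). lia. Qed.

Lemma INRM_pos N : 0 < INR (M N).
Proof. apply lt_0_INR, Mpos. Qed.

Lemma ev_x : exists N0, forall N, (N0 <= N)%nat -> c / 2 < INR (M N) / INR N.
Proof. apply (cv_ev_gt _ c); auto. lra. Qed.

Lemma cv_invM : Un_cv (fun N => / INR (M N)) 0.
Proof.
  destruct ev_x as [N0 H0].
  apply (cv_ev_ext (fun N => / INR N * / (INR (M N) / INR N))) with (N0 := Nat.max N0 1).
  - intros N HN. assert (0 < INR N) by (apply lt_0_INR; lia). pose proof (INRM_pos N). field. lra.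
  - replace 0 with (0 * / c) by ring. apply CV_mult. apply cv_inv_INR. apply cv_inv; auto. lra.
Qed.

Lemma cv_nrm_d1 (t : nat -> R) : Un_cv (fun N => nrm (M N) (dvec (M N) N (t N))) (c ^ 2 / 3).
Proof.
  apply (cv_ev_ext (fun N => (INR (M N) / INR N - / INR N) * (2 * (INR (M N) / INR N) - / INR N) / 6)) with (N0 := 1%nat).
  - intros N HN. rewrite nrm_dvec by (apply Mpos || lia). assert (0 < INR N) by (apply lt_0_INR; lia). field. lra.
  - replace (c ^ 2 / 3) with ((c - 0) * (2 * c - 0) * / 6) by field.
    apply CV_mult; [|apply cv_const]. apply CV_mult; apply CV_minus; auto using cv_inv_INR.
    apply cv_scal; auto.
Qed.

Lemma cv_bkk (t : nat -> R) :
  Un_cv (fun N => Cabs2 (cinner (M N) (steer (M N) (t N)) (dvec (M N) N (t N)))) (c ^ 2 / 4).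
Proof.
  apply (cv_ev_ext (fun N => (INR (M N) / INR N - / INR N) * / 2 * ((INR (M N) / INR N - / INR N) * / 2))) with (N0 := 1%nat).
  - intros N HN. rewrite inner_steer_d by apply Mpos. rewrite Rminus_diag, Tg0.
    rewrite Cabs2_scale. unfold Cabs2; simpl.
    assert (0 < INR N) by (apply lt_0_INR; lia). pose proof (INRM_pos N). field. lra.
  - replace (c ^ 2 / 4) with ((c - 0) * / 2 * ((c - 0) * / 2)) by field.
    assert (Hx : Un_cv (fun N => (INR (M N) / INR N - / INR N) * / 2) ((c - 0) * / 2)).
    { apply CV_mult; [| apply cv_const]. apply CV_minus; auto using cv_inv_INR. }
    apply CV_mult; auto.
Qed.

Lemma steer_self N t : cinner (M N) (steer (M N) t) (steer (M N) t) = C1.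
Proof. rewrite cinner_self, nrm_steer by apply Mpos. reflexivity. Qed.

Section A2part.
Variable lam : nat -> R.
Hypothesis HA2 : A2 c s2 K th S lam.

Lemma A2_result k : (k < K)%nat ->
  liminf_pos (fun N => q1v (M N) K (u N) (dvec (M N) N (th N k))) /\
  liminf_pos (fun N => gammaN (M N) K c s2 lam (u N) (dvec (M N) N (th N k)) (av (M N) (th N) k)) /\
  Un_cv (fun N => q1v (M N) K (u N) (dvec (M N) N (th N k))) (c ^ 2 / 12).
Proof.
  intros Hk.
  destruct HA2 as [[th0 [Hth Hdist]] [[mu [v [Hv Hmu]]] [Hdec Hlast]]].
  assert (Hsc : 0 < s2 * sqrt c) by (apply Rmult_lt_0_compat; auto; apply sqrt_lt_R0; auto).
  assert (Hlam : forall j, (j < K)%nat -> lam (K - 1)%nat <= lam j /\ lam j <= lam 0%nat).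
  { intros j Hj. split; apply (chain_le K lam (fun j Hj => Rlt_le _ _ (Hdec j Hj))); lia. }
  destruct (ev_forall_lt K (fun k N => lam (K - 1)%nat / 2 < mu k N)) as [N1 HN1].
  { intros k' Hk'. apply (cv_ev_gt _ (lam k')); auto. destruct (Hlam k' Hk'). lra. }
  assert (HG : forall N, (N1 <= N)%nat ->
     forall w, lam (K - 1)%nat / 2 * nrm K w <= Re (cinner K w (matvec K (Gram N K (S N)) w))).
  { intros N HN w. destruct (Hv N) as [Hon Heig].
    apply (eig_lower K _ (v N) (fun k => mu k N)); auto.
    - apply Gram_herm.
    - intros k' Hk'. left. apply HN1; auto. }
  set (E := fun k' l N => Cabs2 (Cadd (Gmat (M N) (av (M N) (th N)) k' l) (Copp (delta k' l)))).
  assert (HE : forall k' l, (k' < K)%nat -> (l < K)%nat -> Un_cv (E k' l) 0).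
  { intros k' l Hk' Hl. destruct (Nat.eq_dec k' l) as [<-|Hne].
    - apply (cv_ev_ext (fun _ => 0)) with (N0 := 0%nat); [|apply cv_const].
      intros N _. unfold E, Gmat, av, delta. rewrite Nat.eqb_refl, steer_self. unfold Cabs2; simpl; ring.
    - set (D := 2 - 2 * cos (th0 l - th0 k')).
      assert (HD : 0 < D) by (apply D_pos; intros z; apply Hdist; auto).
      apply (cv_le0 _ (fun N => / INR (M N) * / INR (M N) * (4 / D)) 0).
      + intros N _. unfold E. split. apply Cabs2_nonneg.
        unfold Gmat, av, delta. replace (k' =? l)%nat with false by (symmetry; apply Nat.eqb_neq; auto).
        rewrite Cadd_opp0, inner_steer by apply Mpos. rewrite !Hth. rewrite Cabs2_scale.
        pose proof (Sg_bound (M N) (th0 l - th0 k') HD). fold D in H.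
        replace ((/ INR (M N)) ^ 2) with (/ INR (M N) * / INR (M N)) by ring.
        apply Rmult_le_compat_l; auto. pose proof (INRM_pos N).
        assert (0 < / INR (M N)) by (apply Rinv_0_lt_compat; auto). nra.
      + replace 0 with (0 * 0 * (4 / D)) by ring. apply CV_mult; [apply CV_mult|]; auto using cv_invM, cv_const. }
  set (eta := fun N => sqrt (rsum K (fun k' => rsum K (fun l => E k' l N)))).
  assert (Heta : Un_cv eta 0).
  { apply cv_sqrt0. replace 0 with (rsum K (fun _ => rsum K (fun _ => 0))).
    - apply (cv_rsum K (fun k' N => rsum K (fun l => E k' l N)) (fun _ => rsum K (fun _ => 0))).
      intros k' Hk'. apply (cv_rsum K (fun l N => E k' l N) (fun _ => 0)). intros l Hl. apply HE; auto.
    - rewrite rsum_zero; auto. intros. apply rsum_zero; auto. }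
  assert (HE0 : forall k' l N, 0 <= E k' l N) by (intros; apply Cabs2_nonneg).
  assert (HEle : forall N k' l, (k' < K)%nat -> (l < K)%nat -> E k' l N <= eta N ^ 2).
  { intros N k' l Hk' Hl. unfold eta. rewrite pow2_sqrt.
    - eapply Rle_trans; [| apply (rsum_term_le K (fun k'' => rsum K (fun l' => E k'' l' N)) k')]; auto.
      + apply (rsum_term_le K (fun l' => E k' l' N) l); auto.
      + intros; apply rsum_nonneg; auto.
    - apply rsum_nonneg; intros; apply rsum_nonneg; auto. }
  set (rho := fun N => INR K * eta N).
  assert (Hrho : Un_cv rho 0) by (replace 0 with (INR K * 0) by ring; apply cv_scal; auto).
  assert (HK1 : 0 < / (INR K + 1)) by (apply Rinv_0_lt_compat; pose proof (pos_INR K); lra).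
  destruct (cv_ev_lt rho 0 (/ (INR K + 1)) Hrho HK1) as [N2 HN2].
  assert (Hr : forall N c', Rabs (nrm (M N) (Avec K (av (M N) (th N)) c') - nrm K c') <= rho N * nrm K c').
  { intros N c'. rewrite nrm_Avec. unfold rho. apply qform_near_const. apply sqrt_pos.
    intros; apply HEle; auto. }
  assert (Hrho0 : forall N, 0 <= rho N) by (intros; unfold rho; apply Rmult_le_pos; [apply pos_INR | apply sqrt_pos]).
  assert (HlamK : 0 < lam (K - 1)%nat / 2) by lra.
  set (NN := Nat.max N1 (Nat.max N2 1)).
  set (d := fun N => dvec (M N) N (th N k)).
  assert (Hpack : forall N, (NN <= N)%nat ->
    (forall k' x, (k' < K)%nat -> q1v (M N) K (u N) x <= nrm (M N) x - Cabs2 (cinner (M N) (av (M N) (th N) k') x)) /\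
    (forall x, nrm (M N) x - nrm K (Adj (M N) (av (M N) (th N)) x) / (1 - rho N) <= q1v (M N) K (u N) x) /\
    (forall w x, (forall k', (k' < K)%nat -> cinner (M N) (av (M N) (th N) k') w = C0) ->
      Cabs2 (cinner (M N) w x) <= nrm (M N) w * q1v (M N) K (u N) x) /\
    (forall c0 s0 lamw wmin k0 d1, (k0 < K)%nat -> 0 <= wmin ->
      (forall j l, 0 <= vtheta c0 s0 K lamw j l) ->
      (forall j l, (j < K)%nat -> (K <= l)%nat -> wmin <= vtheta c0 s0 K lamw j l) ->
      wmin * q1v (M N) K (u N) d1 <= gammaN (M N) K c0 s0 lamw (u N) d1 (av (M N) (th N) k0))).
  { intros N HN. destruct (Hu N) as [Hon [Heig [Hord Hzero]]].
    assert (Hr1 : rho N < / (INR K + 1)) by (apply HN2; lia).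
    assert (HKp : 1 <= INR K) by (replace 1 with (INR 1) by reflexivity; apply le_INR; auto).
    assert (Hr2 : rho N * (INR K + 1) < 1).
    { apply Rmult_lt_reg_r with (/ (INR K + 1)); auto. rewrite Rmult_assoc, Rinv_r, Rmult_1_r, Rmult_1_l by lra. auto. }
    apply (Npack (M N) N K (th N) (S N) (u N) (lamN N) HK Hon Heig Hord Hzero (HM N) ltac:(lia)
       (lam (K - 1)%nat / 2) HlamK (HG N ltac:(lia)) (rho N) (Hrho0 N)).
    - nra.
    - rewrite minus_INR by auto. simpl (INR 1). pose proof (Hrho0 N). nra.
    - apply Hr. }
  set (b := fun l N => Cabs2 (cinner (M N) (av (M N) (th N) l) (d N))).
  assert (Hb : forall l, (l < K)%nat -> Un_cv (b l) (if Nat.eqb l k then c ^ 2 / 4 else 0)).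
  { intros l Hl. destruct (Nat.eqb_spec l k) as [->|Hne].
    - unfold b, av, d. apply (cv_bkk (fun N => th N k)).
    - set (D := 2 - 2 * cos (th0 k - th0 l)).
      assert (HD : 0 < D) by (apply D_pos; intros z; apply Hdist; auto).
      apply (cv_le0 _ (fun N => (/ INR N) ^ 2 * (/ INR (M N)) ^ 2 * ((16 / D + 4) / D) + 2 * (/ INR N) ^ 2 / D) 1).
      + intros N HN. split. apply Cabs2_nonneg. unfold b, av, d. rewrite inner_steer_d by apply Mpos.
        rewrite !Hth, Cabs2_Cscale_inner.
        pose proof (Tg_bound (M N) (th0 k - th0 l) HD) as HT. fold D in HT.
        pose proof (INRM_pos N). assert (0 < INR N) by (apply lt_0_INR; lia).
        set (iN := / INR N). set (iM := / INR (M N)). set (T := Cabs2 (Tg (M N) (th0 k - th0 l))) in *.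
        assert (HiM : iM * INR (M N) = 1) by (unfold iM; field; lra).
        assert (0 < iM) by (unfold iM; apply Rinv_0_lt_compat; auto).
        assert (0 < iN) by (unfold iN; apply Rinv_0_lt_compat; auto).
        assert (Hsq : iM ^ 2 * (INR (M N) - 1) ^ 2 <= 1).
        { assert (Hx : iM * (INR (M N) - 1) = 1 - iM) by (rewrite Rmult_minus_distr_l, HiM; ring).
          replace (iM ^ 2 * (INR (M N) - 1) ^ 2) with ((iM * (INR (M N) - 1)) ^ 2) by ring. rewrite Hx.
          assert (iM <= 1). { apply (Rmult_le_reg_r (INR (M N))); auto. rewrite HiM.
            assert (1 <= INR (M N)) by (replace 1 with (INR 1) by reflexivity; apply le_INR; apply Mpos). nra. }
          nra. }
        assert (HT2 : T <= (16 / D + 4) / D + 2 * (INR (M N) - 1) ^ 2 / D) by (unfold Rdiv in *; nra).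
        assert (E1 : (iN * iM) ^ 2 * T <= (iN * iM) ^ 2 * ((16 / D + 4) / D + 2 * (INR (M N) - 1) ^ 2 / D)).
        { apply Rmult_le_compat_l; auto. apply pow2_ge_0. }
        eapply Rle_trans; [exact E1|].
        assert (E2 : (iN * iM) ^ 2 * (2 * (INR (M N) - 1) ^ 2 / D) <= 2 * iN ^ 2 / D).
        { replace ((iN * iM) ^ 2 * (2 * (INR (M N) - 1) ^ 2 / D)) with (2 * iN ^ 2 / D * (iM ^ 2 * (INR (M N) - 1) ^ 2)) by (field; lra).
          assert (0 <= 2 * iN ^ 2 / D) by (unfold Rdiv; apply Rmult_le_pos; [nra | left; apply Rinv_0_lt_compat; auto]).
          nra. }
        nra.
      + replace 0 with (0 ^ 2 * 0 ^ 2 * ((16 / D + 4) / D) + 2 * 0 ^ 2 / D) by (field; lra).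
        assert (Hp : forall (w : nat -> R), Un_cv w 0 -> Un_cv (fun N => w N ^ 2) (0 ^ 2)).
        { intros w Hw. simpl. rewrite Rmult_1_r. apply (cv_ev_ext (fun N => w N * w N)) with (N0 := 0%nat).
          intros; ring. apply CV_mult; auto. }
        apply CV_plus.
        * apply CV_mult; [apply CV_mult|apply cv_const]; apply Hp; auto using cv_inv_INR, cv_invM.
        * unfold Rdiv. apply CV_mult; [|apply cv_const]. apply cv_scal. apply Hp. apply cv_inv_INR. }
  assert (HbS : Un_cv (fun N => rsum K (fun l => b l N)) (c ^ 2 / 4)).
  { rewrite <- (rsum_delta K k (c ^ 2 / 4) Hk). apply (cv_rsum K b). auto. }
  assert (Hq : Un_cv (fun N => q1v (M N) K (u N) (d N)) (c ^ 2 / 12)).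
  { apply (cv_squeeze (fun N => nrm (M N) (d N) - rsum K (fun l => b l N) / (1 - rho N)) _
       (fun N => nrm (M N) (d N) - b k N) _ NN).
    - intros N HN. destruct (Hpack N HN) as [P1 [P2 _]]. split. apply P2. apply P1; auto.
    - replace (c ^ 2 / 12) with (c ^ 2 / 3 - c ^ 2 / 4 * / (1 - 0)) by field.
      apply CV_minus. apply cv_nrm_d1. unfold Rdiv. apply CV_mult; auto.
      apply cv_inv. apply CV_minus; auto using cv_const. lra.
    - replace (c ^ 2 / 12) with (c ^ 2 / 3 - c ^ 2 / 4) by field.
      apply CV_minus. apply cv_nrm_d1. pose proof (Hb k Hk) as Hbk. rewrite Nat.eqb_refl in Hbk. exact Hbk. }
  assert (Hc12 : 0 < c ^ 2 / 12) by (apply Rmult_lt_0_compat; [nra | lra]).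
  destruct (cv_ev_gt _ _ (c ^ 2 / 24) Hq ltac:(lra)) as [N3 HN3].
  split; [|split].
  - exists (c ^ 2 / 24). split. nra. exists N3. intros N HN. left. apply HN3; auto.
  - set (wmin := s2 / (4 * lam 0%nat)).
    assert (Hl0 : 0 < lam 0%nat) by (destruct (Hlam 0%nat ltac:(lia)); lra).
    assert (Hwm : 0 < wmin) by (unfold wmin; apply Rdiv_lt_0_compat; lra).
    destruct (vtheta_props c s2 K lam (lam 0%nat) Hc Hs2) as [Hv0 Hv1].
    { intros j Hj. destruct (Hlam j Hj). split; lra. }
    exists (wmin * (c ^ 2 / 24)). split. apply Rmult_lt_0_compat; nra.
    exists (Nat.max N3 NN). intros N HN.
    destruct (Hpack N ltac:(lia)) as [_ [_ [_ P4]]].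
    pose proof (P4 c s2 lam wmin k (d N) Hk ltac:(lra) Hv0 Hv1) as G1.
    pose proof (HN3 N ltac:(lia)).
    assert (wmin * (c ^ 2 / 24) <= wmin * q1v (M N) K (u N) (d N)) by (apply Rmult_le_compat_l; lra).
    unfold d, av in *. lra.
  - exact Hq.
Qed.

End A2part.

End Main.

Lemma sin_over_cv (t : nat -> R) N0 : Un_cv t 0 -> (forall N, (N0 <= N)%nat -> t N <> 0) ->
  Un_cv (fun N => sin (t N) / t N) 1.
Proof.
  intros Ht Hnz e He. destruct (derivable_pt_lim_sin_0 e He) as [del Hdel].
  destruct (Ht del (cond_pos del)) as [N1 HN1]. exists (Nat.max N0 N1). intros N HN.
  specialize (HN1 N ltac:(lia)). unfold Rdist in *. rewrite Rminus_0_r in HN1.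
  specialize (Hdel (t N) (Hnz N ltac:(lia)) HN1). rewrite Rplus_0_l, sin_0, Rminus_0_r in Hdel. exact Hdel.
Qed.

Lemma Cabs2_expi_diff a b : Cabs2 (Cadd (Cexpi a) (Copp (Cexpi b))) = 2 - 2 * cos (a - b).
Proof.
  unfold Cabs2, Cexpi; simpl. rewrite cos_minus.
  pose proof (sin2_cos2 a) as Ha. pose proof (sin2_cos2 b) as Hb. unfold Rsqr in *. nra.
Qed.

Lemma sinc_sq x : 0 < x -> sinc x ^ 2 = (2 - 2 * cos (2 * x)) / (4 * x ^ 2).
Proof.
  intros Hx. unfold sinc. destruct (Req_EM_T x 0) as [E|E]; [lra|].
  rewrite cos_2a_sin. field. auto.
Qed.

Lemma div_bounds N q : (0 < q)%nat -> INR (N / q) * INR q <= INR N /\ INR N < (INR (N / q) + 1) * INR q.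
Proof.
  intros Hq. pose proof (Nat.div_mod N q ltac:(lia)) as E. pose proof (Nat.mod_upper_bound N q ltac:(lia)) as B.
  split.
  - rewrite <- mult_INR. apply le_INR. nia.
  - assert (INR (N mod q) < INR q) by (apply lt_INR; auto).
    rewrite E at 1. rewrite plus_INR, mult_INR. nra.
Qed.

Lemma tv_bound n Nn h L t t' q : (0 < n)%nat -> (0 < Nn)%nat -> (2 * h + L <= n)%nat -> (0 < L)%nat -> 0 <= q ->
  (forall w, cinner n (steer n t) w = C0 -> cinner n (steer n t') w = C0 ->
     Cabs2 (cinner n w (dvec n Nn t)) <= nrm n w * q) ->
  INR L * (/ INR Nn) ^ 2 * / INR n * INR h ^ 2 * (2 - 2 * cos (INR h * t - INR h * t')) / 22 <= q.
Proof.
  intros Hn HN HL HL0 Hq H.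
  set (w := wv L h t t').
  assert (P1 : cinner n (steer n t) w = C0).
  { rewrite cinner_conj. unfold w. rewrite wv_perp by auto. cx. }
  assert (P2 : cinner n (steer n t') w = C0).
  { rewrite cinner_conj. unfold w. rewrite wv_perp by auto. cx. }
  specialize (H w P1 P2). unfold w in H. rewrite wv_d1 in H by auto.
  rewrite Cabs2_scale, Cabs2_mul, Cabs2_expi_diff in H.
  replace (Cabs2 {| Re := 0; Im := INR h |}) with (INR h ^ 2) in H by (unfold Cabs2; simpl; ring).
  pose proof (nrm_wv n L h t t' HL) as HW.
  assert (HLp : 0 < INR L) by (apply lt_0_INR; auto).
  assert (Hs : (/ sqrt (INR n)) ^ 2 = / INR n).
  { replace ((/ sqrt (INR n)) ^ 2) with (/ sqrt (INR n) * / sqrt (INR n)) by ring. apply inv_sqrt_sq; auto. }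
  replace ((INR L * (/ INR Nn * / sqrt (INR n))) ^ 2) with (INR L ^ 2 * (/ INR Nn) ^ 2 * (/ sqrt (INR n)) ^ 2) in H by ring.
  rewrite Hs in H.
  assert (Hb : nrm n (wv L h t t') * q <= 22 * INR L * q) by (apply Rmult_le_compat_r; auto).
  apply Rmult_le_reg_l with (22 * INR L). lra.
  replace (22 * INR L * (INR L * (/ INR Nn) ^ 2 * / INR n * INR h ^ 2 * (2 - 2 * cos (INR h * t - INR h * t')) / 22))
    with (INR L ^ 2 * (/ INR Nn) ^ 2 * / INR n * (INR h ^ 2 * (2 - 2 * cos (INR h * t - INR h * t')))) by (field; repeat split; apply not_0_INR; lia).
  lra.
Qed.

Lemma Cabs2_sub_conv (G : nat -> Cx) (z : Cx) : Cconv G z ->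
  Un_cv (fun N => Cabs2 (Cadd (G N) (Copp z))) 0.
Proof.
  intros [H1 H2]. unfold Cabs2; simpl.
  replace 0 with ((Re z - Re z) * ((Re z - Re z) * 1) + (Im z - Im z) * ((Im z - Im z) * 1)) by ring.
  assert (A1 : Un_cv (fun N => Re (G N) + - Re z) (Re z - Re z)) by (apply CV_minus; auto; apply cv_const).
  assert (A2 : Un_cv (fun N => Im (G N) + - Im z) (Im z - Im z)) by (apply CV_minus; auto; apply cv_const).
  apply CV_plus; apply CV_mult; auto; (apply CV_mult; [auto| apply cv_const]).
Qed.

Lemma kappa_bound (Nr n h L alpha qr : R) : 0 < Nr -> 0 < n -> 1 <= qr -> h * qr <= Nr -> Nr < (h + 1) * qr ->
  2 * qr <= Nr -> n / 2 <= L -> alpha / qr < PI -> 0 < alpha ->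
  1 / 2 * (1 / (2 * qr)) ^ 2 * (2 - 2 * cos (alpha / (2 * qr))) / 22 <=
  L * (/ Nr) ^ 2 * / n * h ^ 2 * (2 - 2 * cos (h * alpha / Nr)) / 22.
Proof.
  intros HN Hn Hq H1 H2 H3 HL Hpi Ha.
  assert (HPI := PI_RGT_0).
  set (y := h / Nr).
  assert (Hy1 : 1 / (2 * qr) <= y).
  { unfold y. apply div_le_cross; try lra; nra. }
  assert (Hy2 : y <= 1 / qr).
  { unfold y. apply div_le_cross; try lra. }
  assert (Hy0 : 0 < y) by (assert (0 < 1 / (2 * qr)) by (apply Rdiv_lt_0_compat; lra); lra).
  assert (Hc1 : cos (h * alpha / Nr) <= cos (alpha / (2 * qr))).
  { replace (h * alpha / Nr) with (y * alpha) by (unfold y; field; lra).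
    assert (alpha / (2 * qr) <= y * alpha).
    { replace (alpha / (2 * qr)) with (1 / (2 * qr) * alpha) by (field; lra). apply Rmult_le_compat_r; lra. }
    assert (y * alpha <= alpha / qr).
    { replace (alpha / qr) with (1 / qr * alpha) by (field; lra). apply Rmult_le_compat_r; lra. }
    assert (0 < alpha / (2 * qr)) by (apply Rdiv_lt_0_compat; lra).
    destruct (Req_dec (alpha / (2 * qr)) (y * alpha)) as [E|E]. rewrite E; lra.
    left. apply cos_decreasing_1; lra. }
  assert (Hc0 : cos (alpha / (2 * qr)) <= 1) by apply COS_bound.
  replace (L * (/ Nr) ^ 2 * / n * h ^ 2 * (2 - 2 * cos (h * alpha / Nr)) / 22)
    with (L / n * y ^ 2 * (2 - 2 * cos (h * alpha / Nr)) / 22) by (unfold y; field; lra).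
  assert (HLn : 1 / 2 <= L / n) by (apply div_le_cross; lra).
  assert (Hyy : (1 / (2 * qr)) ^ 2 <= y ^ 2).
  { assert (0 < 1 / (2 * qr)) by (apply Rdiv_lt_0_compat; lra). nra. }
  assert (0 <= 2 - 2 * cos (alpha / (2 * qr))) by lra.
  assert (0 <= (1 / (2 * qr)) ^ 2) by nra.
  apply Rmult_le_compat_r. lra.
  apply Rmult_le_compat; try nra.
Qed.

Lemma A3_result (c s2 : R) (K : nat) (M : nat -> nat) (th : nat -> nat -> R)
  (S : nat -> nat -> nat -> Cx) (u : nat -> nat -> nat -> Cx) (lamN : nat -> nat -> R)
  (Hc : 0 < c) (Hs2 : 0 < s2) (HK : (1 <= K)%nat)
  (HM : forall N, (K < M N)%nat)
  (HMc : Un_cv (fun N => INR (M N) / INR N) c)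
  (Hu : forall N,
     orthonormal (M N) (M N) (u N) /\
     (forall j, (j < M N)%nat ->
        is_eigvec (M N) (BBs (M N) N K (th N) (S N)) (lamN N j) (u N j)) /\
     (forall j, (j + 1 < K)%nat -> lamN N (j + 1)%nat <= lamN N j) /\
     (forall j, (K <= j)%nat -> (j < M N)%nat -> lamN N j = 0))
  alpha (HA3 : A3 c s2 K th S alpha) k (Hk : (k < K)%nat) :
  liminf_pos (fun N => q1v (M N) K (u N) (dvec (M N) N (th N k))) /\
  liminf_pos (fun N => gammaN (M N) K c s2 (lamA3 c alpha) (u N) (dvec (M N) N (th N k)) (av (M N) (th N) k)).
Proof.
  destruct HA3 as [HK2 [HGc [Hth1 [Ha Hsinc]]]]. subst K.
  assert (Hsc : 0 < s2 * sqrt c) by (apply Rmult_lt_0_compat; auto; apply sqrt_lt_R0; auto).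
  set (sig := Rabs (sinc (alpha * c / 2))) in *.
  assert (Hsig0 : 0 <= sig) by apply Rabs_pos.
  assert (Hsig1 : sig < 1) by lra.
  set (r1 := (sig + 1) / 2).
  assert (Hr10 : 0 <= r1) by (unfold r1; lra). assert (Hr11 : r1 < 1) by (unfold r1; lra).
  destruct (ev_forall_lt 2 (fun i N => forall j, (j < 2)%nat ->
      Cabs2 (Cadd (Gram N 2 (S N) i j) (Copp (delta i j))) <= (1/4) ^ 2)) as [N1 HN1].
  { intros i Hi. apply (ev_forall_lt 2 (fun j N => Cabs2 (Cadd (Gram N 2 (S N) i j) (Copp (delta i j))) <= (1/4) ^ 2)).
    intros j Hj. destruct (cv_ev_lt _ 0 ((1/4)^2) (Cabs2_sub_conv _ _ (HGc i j Hi Hj)) ltac:(lra)) as [N0 H0].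
    exists N0. intros N HN. left. unfold delta. apply H0; auto. }
  assert (HG : forall N, (N1 <= N)%nat -> forall w, 1/2 * nrm 2 w <= Re (cinner 2 w (matvec 2 (Gram N 2 (S N)) w))).
  { intros N HN w. pose proof (qform_near_const 2 (Gram N 2 (S N)) (1/4) w ltac:(lra)
        (fun i j Hi Hj => HN1 N HN i Hi j Hj)) as Q.
    apply abs_le_inv in Q. simpl (INR 2) in Q. pose proof (nrm_nonneg 2 w). lra. }
  set (Q := fun N => INR N ^ 2 * (2 - 2 * cos (alpha / INR N))).
  assert (HQ : Un_cv Q (alpha ^ 2)).
  { set (t := fun N => alpha / 2 * / INR N).
    assert (Ht : Un_cv t 0) by (unfold t; replace 0 with (alpha / 2 * 0) by ring; apply cv_scal, cv_inv_INR).
    assert (Htnz : forall N, (1 <= N)%nat -> t N <> 0).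
    { intros N HN. unfold t. assert (0 < INR N) by (apply lt_0_INR; lia).
      apply Rmult_integral_contrapositive; split; [lra | apply Rinv_neq_0_compat; lra]. }
    pose proof (sin_over_cv t 1 Ht Htnz) as Hsq.
    apply (cv_ev_ext (fun N => alpha ^ 2 * ((sin (t N) / t N) * (sin (t N) / t N)))) with (N0 := 1%nat).
    - intros N HN. unfold Q. assert (0 < INR N) by (apply lt_0_INR; lia).
      replace (alpha / INR N) with (2 * t N) by (unfold t; field; lra).
      rewrite cos_2a_sin. unfold t. field. split; lra.
    - assert (L : Un_cv (fun N => alpha ^ 2 * (sin (t N) / t N * (sin (t N) / t N))) (alpha ^ 2 * (1 * 1)))
        by (apply cv_scal; apply CV_mult; auto).
      rewrite !Rmult_1_r in L. exact L. }
  set (F := fun N => (2 - 2 * cos (INR (M N) / INR N * alpha)) / ((INR (M N) / INR N) ^ 2 * Q N)).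
  assert (HF : Un_cv F (sig ^ 2)).
  { unfold sig. rewrite pow2_abs, sinc_sq by nra.
    replace (2 * (alpha * c / 2)) with (c * alpha) by field.
    replace ((2 - 2 * cos (c * alpha)) / (4 * (alpha * c / 2) ^ 2)) with
      ((2 - 2 * cos (c * alpha)) * / (c ^ 2 * alpha ^ 2)) by (field; lra).
    unfold F, Rdiv. apply CV_mult.
    - apply CV_minus. apply cv_const. apply cv_scal.
      apply (continuity_seq cos (fun N => INR (M N) / INR N * alpha) (c * alpha)).
      + apply continuity_cos.
      + apply CV_mult; auto; apply cv_const.
    - apply cv_inv. apply CV_mult; auto.
      + apply (cv_ev_ext (fun N => INR (M N) / INR N * (INR (M N) / INR N)) (fun N => (INR (M N) / INR N) ^ 2) (c ^ 2) 0%nat).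
        intros; ring. replace (c ^ 2) with (c * c) by ring. apply CV_mult; auto.
      + assert (0 < c ^ 2 * alpha ^ 2) by (apply Rmult_lt_0_compat; nra). lra. }
  assert (Hsr : sig ^ 2 < r1 ^ 2) by (unfold r1; nra).
  destruct (cv_ev_lt F _ _ HF Hsr) as [N2 HN2].
  destruct (nat_unbounded (alpha / PI)) as [Npi HNpi].
  assert (HPI := PI_RGT_0).
  assert (HG01 : forall N, (Nat.max 1 Npi <= N)%nat ->
     Cabs2 (Gmat (M N) (av (M N) (th N)) 0%nat 1%nat) = F N).
  { intros N HN. assert (HNp : 0 < INR N) by (apply lt_0_INR; lia).
    assert (HNpi' : INR Npi <= INR N) by (apply le_INR; lia).
    assert (Han : 0 < alpha / INR N <= PI).
    { split. apply Rdiv_lt_0_compat; auto.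
      apply (Rmult_le_reg_r (INR N)); auto. unfold Rdiv. rewrite Rmult_assoc, Rinv_l, Rmult_1_r by lra.
      apply (Rmult_lt_compat_r PI) in HNpi; auto. unfold Rdiv in HNpi. rewrite Rmult_assoc, Rinv_l, Rmult_1_r in HNpi by lra.
      assert (1 <= INR N) by (replace 1 with (INR 1) by reflexivity; apply le_INR; lia). nra. }
    assert (HD : cos (alpha / INR N) < 1).
    { rewrite <- cos_0. apply cos_decreasing_1; lra. }
    unfold Gmat, av. rewrite inner_steer by (pose proof (HM N); lia).
    rewrite Hth1 by lia. replace (th N 0%nat + alpha / INR N - th N 0%nat) with (alpha / INR N) by ring.
    rewrite Cabs2_scale.
    pose proof (Sg_exact (M N) (alpha / INR N)) as E.
    assert (HMp : 0 < INR (M N)) by (apply lt_0_INR; pose proof (HM N); lia).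
    assert (HS : Cabs2 (Sg (M N) (alpha / INR N)) = (2 - 2 * cos (INR (M N) * (alpha / INR N))) / (2 - 2 * cos (alpha / INR N))).
    { rewrite <- E. field. lra. }
    rewrite HS. unfold F, Q. replace (INR (M N) / INR N * alpha) with (INR (M N) * (alpha / INR N)) by (field; lra).
    field. repeat split; lra. }
  set (NN := Nat.max N1 (Nat.max N2 (Nat.max 1 Npi))).
  assert (Hself : forall N j, cinner (M N) (av (M N) (th N) j) (av (M N) (th N) j) = C1).
  { intros N j. unfold av. rewrite cinner_self, nrm_steer by (pose proof (HM N); lia). reflexivity. }
  assert (Hpack : forall N, (NN <= N)%nat ->
    (forall k' x, (k' < 2)%nat -> q1v (M N) 2 (u N) x <= nrm (M N) x - Cabs2 (cinner (M N) (av (M N) (th N) k') x)) /\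
    (forall x, nrm (M N) x - nrm 2 (Adj (M N) (av (M N) (th N)) x) / (1 - r1) <= q1v (M N) 2 (u N) x) /\
    (forall w x, (forall k', (k' < 2)%nat -> cinner (M N) (av (M N) (th N) k') w = C0) ->
      Cabs2 (cinner (M N) w x) <= nrm (M N) w * q1v (M N) 2 (u N) x) /\
    (forall c0 s0 lamw wmin k0 d1, (k0 < 2)%nat -> 0 <= wmin ->
      (forall j l, 0 <= vtheta c0 s0 2 lamw j l) ->
      (forall j l, (j < 2)%nat -> (2 <= l)%nat -> wmin <= vtheta c0 s0 2 lamw j l) ->
      wmin * q1v (M N) 2 (u N) d1 <= gammaN (M N) 2 c0 s0 lamw (u N) d1 (av (M N) (th N) k0))).
  { intros N HN. destruct (Hu N) as [Hon [Heig [Hord Hzero]]].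
    apply (Npack (M N) N 2 (th N) (S N) (u N) (lamN N) HK Hon Heig Hord Hzero (HM N) ltac:(lia)
       (1/2) ltac:(lra) (HG N ltac:(lia)) r1 Hr10 Hr11).
    - simpl. lra.
    - intros c'. rewrite nrm_Avec. apply qform_near_2; auto.
      + unfold Gmat. apply Hself.
      + unfold Gmat. apply Hself.
      + rewrite HG01 by lia. left. apply HN2. lia.
      + unfold Gmat. rewrite cinner_conj, Cabs2_conj. fold (Gmat (M N) (av (M N) (th N)) 0%nat 1%nat).
        rewrite HG01 by lia. left. apply HN2. lia. }
  destruct (nat_unbounded (8 / c + alpha / PI + 1)) as [qn Hqn].
  assert (Hqc : 8 / c < INR qn). { assert (0 < alpha / PI) by (apply Rdiv_lt_0_compat; lra). lra. }
  assert (Hqa : alpha / PI < INR qn). { assert (0 < 8 / c) by (apply Rdiv_lt_0_compat; lra). lra. }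
  assert (Hq1 : 1 <= INR qn). { assert (0 < 8 / c) by (apply Rdiv_lt_0_compat; lra).
    assert (0 < alpha / PI) by (apply Rdiv_lt_0_compat; lra). lra. }
  assert (Hqn0 : (0 < qn)%nat) by (apply INR_lt; simpl; lra).
  assert (Hapi : alpha / INR qn < PI).
  { apply (Rmult_lt_reg_r (INR qn)); [lra|]. unfold Rdiv. rewrite Rmult_assoc, Rinv_l, Rmult_1_r by lra.
    apply (Rmult_lt_compat_r PI) in Hqa; auto. unfold Rdiv in Hqa. rewrite Rmult_assoc, Rinv_l, Rmult_1_r in Hqa by lra. lra. }
  destruct (cv_ev_gt _ c (c / 2) HMc ltac:(lra)) as [N3 HN3].
  set (NT := Nat.max NN (Nat.max N3 (2 * qn))).
  set (kap := 1 / 2 * (1 / (2 * INR qn)) ^ 2 * (2 - 2 * cos (alpha / (2 * INR qn))) / 22).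
  assert (Hkap : 0 < kap).
  { unfold kap. assert (cos (alpha / (2 * INR qn)) < 1).
    { rewrite <- cos_0. apply cos_decreasing_1; try lra.
      - left. apply Rdiv_lt_0_compat; lra.
      - assert (alpha / (2 * INR qn) < alpha / INR qn) by (apply Rmult_lt_compat_l; [lra| apply Rinv_lt_contravar; nra]). lra.
      - apply Rdiv_lt_0_compat; lra. }
    assert (0 < 1 / (2 * INR qn)) by (apply Rdiv_lt_0_compat; lra).
    apply Rdiv_lt_0_compat; [|lra]. apply Rmult_lt_0_compat; [apply Rmult_lt_0_compat; nra|lra]. }
  assert (Hq1N : forall N, (NT <= N)%nat -> kap <= q1v (M N) 2 (u N) (dvec (M N) N (th N k))).
  { intros N HN.
    assert (HNp : 0 < INR N) by (apply lt_0_INR; lia).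
    set (n := M N). set (h := (N / qn)%nat). set (L := (n - 2 * h)%nat).
    destruct (div_bounds N qn Hqn0) as [Hd1 Hd2]. fold h in Hd1, Hd2.
    assert (Hx : c / 2 < INR n / INR N) by (apply HN3; lia).
    assert (Hnc : c / 2 * INR N < INR n).
    { replace (INR n) with (INR n / INR N * INR N) by (field; lra). apply Rmult_lt_compat_r; auto. }
    assert (H8 : 8 < c * INR qn).
    { replace 8 with (8 / c * c) by (field; lra). rewrite (Rmult_comm c). apply Rmult_lt_compat_r; auto. }
    assert (H4 : 4 * INR h < INR n).
    { assert (4 * INR h * INR qn < c / 2 * INR N * INR qn) by nra.
      assert (4 * INR h < c / 2 * INR N) by (apply (Rmult_lt_reg_r (INR qn)); lra). lra. }
    assert (H4n : (4 * h < n)%nat) by (apply INR_lt; rewrite mult_INR; simpl (INR 4); lra).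
    assert (HLr : INR L = INR n - 2 * INR h) by (unfold L; rewrite minus_INR, mult_INR by lia; simpl; ring).
    assert (HL0 : (0 < L)%nat) by (unfold L; lia).
    assert (Hn0 : (0 < n)%nat) by (unfold n; pose proof (HM N); lia).
    destruct (Hpack N ltac:(lia)) as [_ [_ [P3 _]]].
    assert (Hq0 : 0 <= q1v (M N) 2 (u N) (dvec (M N) N (th N k))).
    { destruct (Hu N) as [Hon _]. rewrite (q1_tail (M N) N 2 (u N) Hon (HM N) ltac:(lia)). apply nrm_nonneg. }
    set (t := th N k). set (t' := th N (1 - k)%nat).
    assert (Hcos : cos (INR h * t - INR h * t') = cos (INR h * alpha / INR N)).
    { unfold t, t'. destruct k as [|[|k']]; [| | lia]; simpl (1 - _)%nat.
      - rewrite Hth1 by lia. replace (INR h * th N 0%nat - INR h * (th N 0%nat + alpha / INR N)) with (- (INR h * alpha / INR N)) by (field; lra).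
        apply cos_neg.
      - rewrite Hth1 by lia. f_equal. field. lra. }
    pose proof (tv_bound n N h L t t' (q1v (M N) 2 (u N) (dvec (M N) N (th N k))) Hn0 ltac:(lia) ltac:(lia) HL0 Hq0) as TV.
    assert (Hkb := kappa_bound (INR N) (INR n) (INR h) (INR L) alpha (INR qn) HNp ltac:(apply lt_0_INR; auto) Hq1 Hd1 Hd2).
    assert (H2q : 2 * INR qn <= INR N).
    { replace 2 with (INR 2) by reflexivity. rewrite <- mult_INR. apply le_INR. lia. }
    rewrite Hcos in TV. unfold kap. eapply Rle_trans; [apply Hkb; auto; lra|].
    apply TV. intros w Hw1 Hw2. apply P3. intros k' Hk'. unfold av.
    destruct k as [|[|k0]]; destruct k' as [|[|k1]]; try lia; unfold t, t' in *; simpl in *; auto. }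
  split.
  - exists kap. split; auto. exists NT. auto.
  - set (wmin := s2 / (4 * 2)).
    assert (Hwm : 0 < wmin) by (unfold wmin; apply Rdiv_lt_0_compat; lra).
    destruct (vtheta_props c s2 2 (lamA3 c alpha) 2 Hc Hs2) as [Hv0 Hv1].
    { intros j Hj. unfold lamA3. fold sig. destruct j as [|[|j]]; simpl; lra. }
    exists (wmin * kap). split. apply Rmult_lt_0_compat; auto.
    exists NT. intros N HN.
    destruct (Hpack N ltac:(lia)) as [_ [_ [_ P4]]].
    pose proof (P4 c s2 (lamA3 c alpha) wmin k (dvec (M N) N (th N k)) Hk ltac:(lra) Hv0 Hv1) as G1.
    pose proof (Hq1N N HN).
    assert (wmin * kap <= wmin * q1v (M N) 2 (u N) (dvec (M N) N (th N k))) by (apply Rmult_le_compat_l; lra).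
    lra.
Qed.

Theorem mainTheorem10
  (c s2 : R) (K : nat) (M : nat -> nat)
  (th : nat -> nat -> R) (S : nat -> nat -> nat -> Cx)
  (u : nat -> nat -> nat -> Cx) (lamN : nat -> nat -> R)
  (Hc : 0 < c) (Hs2 : 0 < s2) (HK : (1 <= K)%nat)
  (HM : forall N, (K < M N)%nat)
  (HMc : Un_cv (fun N => INR (M N) / INR N) c)
  (Hu : forall N,
     orthonormal (M N) (M N) (u N) /\
     (forall j, (j < M N)%nat ->
        is_eigvec (M N) (BBs (M N) N K (th N) (S N)) (lamN N j) (u N j)) /\
     (forall j, (j + 1 < K)%nat -> lamN N (j + 1)%nat <= lamN N j) /\
     (forall j, (K <= j)%nat -> (j < M N)%nat -> lamN N j = 0)) :
  let d1 N k := fun i => Cscale (/ INR N) (steer' (M N) (th N k) i) in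
  let d2 N k := steer (M N) (th N k) in
  let q1 k N := Re (qform (M N) (PiMat K (u N)) (d1 N k) (d1 N k)) in
  let gam lam k N := gammaN (M N) K c s2 lam (u N) (d1 N k) (d2 N k) in
  (forall lam, A2 c s2 K th S lam ->
     forall k, (k < K)%nat ->
       liminf_pos (q1 k) /\ liminf_pos (gam lam k) /\ Un_cv (q1 k) (c ^ 2 / 12)) /\
  (forall alpha, A3 c s2 K th S alpha ->
     forall k, (k < K)%nat ->
       liminf_pos (q1 k) /\ liminf_pos (gam (lamA3 c alpha) k)).
Proof.
Proof.
  intros d1 d2 q1 gam. split.
  - intros lam HA2 k Hk. exact (A2_result c s2 K M th S u lamN Hc Hs2 HK HM HMc Hu lam HA2 k Hk).
  - intros alpha HA3 k Hk. exact (A3_result c s2 K M th S u lamN Hc Hs2 HK HM HMc Hu alpha HA3 k Hk).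
Qed.
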